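(* Let $0<a<1$ and define $\eta:\mathbb C_+\to\mathbb C$, $\mathbb C_+=\{\operatorname{Re}w>0\}$, by $\eta(w)=w-(\log(w+3))^a$ (principal branches). Then $\eta$ is univalent on $\mathbb C_+$, and $\Omega_0=\eta(\mathbb C_+)$ is a logarithmic starlike at infinity domain with $p$-frequencies which is not contained in any half-plane.
   Context: A logarithmic starlike at infinity domain is $\{x+iy:x>\psi(y)\}$ where $\psi:\mathbb R\to\mathbb R$ is differentiable with $|\psi'|\le K$ for some $K>0$, and there exist $R>0$ and $0<b<1$ with $\psi(y)\ge -b\log|y|$ for $|y|\ge R$. Such a domain $\Omega_0$ has $p$-frequencies if there exists $p_0\ge1$ such that $e^{\lambda z}\in H^{p_0}(\Omega_0)$ for all $\lambda\le0$, where for a simply connected domain $G\subsetneq\mathbb C$ and $p\in[1,\infty)$, $H^p(G)$ is the space of holomorphic $f$ on $G$ such that $|f|^p$ has a harmonic majorant. *)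

(* Defs.v *)
From Stdlib Require Import Reals Lra.
From Coquelicot Require Import Coquelicot.
Open Scope R_scope.

(** Principal argument, values in (-PI, PI]. *)
Definition Carg (z : C) : R :=
  let x := Re z in let y := Im z in
  if Rlt_dec 0 x then atan (y / x)
  else if Rlt_dec x 0 then
    (if Rle_dec 0 y then atan (y / x) + PI else atan (y / x) - PI)
  else if Rlt_dec 0 y then PI / 2
  else if Rlt_dec y 0 then - (PI / 2) else 0.

Definition Cexp (z : C) : C :=
  (exp (Re z) * cos (Im z), exp (Re z) * sin (Im z)).

(** Principal logarithm (defined for z <> 0). *)
Definition Clog (z : C) : C := (ln (Cmod z), Carg z).

(** Principal power z^a = exp (a log z), with 0^a = 0. *)
Definition Cpow (z : C) (a : R) : C :=
  if Req_EM_T (Cmod z) 0 then 0%C else Cexp (Cmult (RtoC a) (Clog z)).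

Definition Cplus_half (w : C) : Prop := 0 < Re w.

Definition eta (a : R) (w : C) : C :=
  Cminus w (Cpow (Clog (Cplus w (RtoC 3))) a).

Definition holomorphic_on (G : C -> Prop) (f : C -> C) : Prop :=
  forall z, G z -> @ex_derive C_AbsRing C_NormedModule f z.

Definition univalent_on (G : C -> Prop) (f : C -> C) : Prop :=
  holomorphic_on G f /\ (forall z w, G z -> G w -> f z = f w -> z = w).

Definition open_set (G : C -> Prop) : Prop :=
  forall z, G z -> exists eps : posreal,
    forall w, Cmod (Cminus w z) < eps -> G w.

Definition dx (u : C -> R) : C -> R := fun z => Derive (fun t => u (t, Im z)) (Re z).
Definition dy (u : C -> R) : C -> R := fun z => Derive (fun t => u (Re z, t)) (Im z).

Definition cont_at (u : C -> R) (z : C) : Prop :=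
  forall eps : posreal, exists delta : posreal,
    forall w, Cmod (Cminus w z) < delta -> Rabs (u w - u z) < eps.

Definition harmonic_on (G : C -> Prop) (u : C -> R) : Prop :=
  forall z, G z ->
    ex_derive (fun t => u (t, Im z)) (Re z) /\
    ex_derive (fun t => u (Re z, t)) (Im z) /\
    ex_derive (fun t => dx u (t, Im z)) (Re z) /\
    ex_derive (fun t => dx u (Re z, t)) (Im z) /\
    ex_derive (fun t => dy u (t, Im z)) (Re z) /\
    ex_derive (fun t => dy u (Re z, t)) (Im z) /\
    cont_at u z /\ cont_at (dx u) z /\ cont_at (dy u) z /\
    cont_at (dx (dx u)) z /\ cont_at (dy (dx u)) z /\
    cont_at (dx (dy u)) z /\ cont_at (dy (dy u)) z /\
    dx (dx u) z + dy (dy u) z = 0.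

Definition rpow (x p : R) : R := if Rle_dec x 0 then 0 else Rpower x p.

(** Hardy space H^p(G): holomorphic f on G such that |f|^p has a harmonic
    majorant on G. *)
Definition in_Hardy (p : R) (G : C -> Prop) (f : C -> C) : Prop :=
  holomorphic_on G f /\
  exists u : C -> R, harmonic_on G u /\
    forall z, G z -> rpow (Cmod (f z)) p <= u z.

Definition log_starlike_at_infinity (Om : C -> Prop) : Prop :=
  exists psi : R -> R,
    (forall y, ex_derive psi y) /\
    (exists K, 0 < K /\ forall y, Rabs (Derive psi y) <= K) /\
    (exists Rr b, 0 < Rr /\ 0 < b < 1 /\
       forall y, Rr <= Rabs y -> - b * ln (Rabs y) <= psi y) /\
    (forall z, Om z <-> psi (Im z) < Re z).

Definition has_p_frequencies (Om : C -> Prop) : Prop :=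
  exists p0, 1 <= p0 /\
    forall lam : R, lam <= 0 -> in_Hardy p0 Om (fun z => Cexp (Cmult (RtoC lam) z)).

Definition in_some_half_plane (Om : C -> Prop) : Prop :=
  exists (c : C) (t : R), c <> 0%C /\ forall z, Om z -> t <= Re (Cmult c z).

(* Main.v *)
Require Import Defs.
From Stdlib Require Import Reals Lra Lia ClassicalEpsilon.
From Coquelicot Require Import Coquelicot.
Open Scope R_scope.


Lemma cderiv_intro (f : C -> C) (z l : C) :
  (forall eps, 0 < eps -> exists del, 0 < del /\ forall w, Cmod (w - z) < del ->
     Cmod (f w - f z - (w - z) * l) <= eps * Cmod (w - z)) ->
  @is_derive C_AbsRing C_NormedModule f z l.
Proof.
  intros H. split.
  - apply is_linear_scal_l.
  - intros x Hx. apply (@is_filter_lim_locally_unique C_AbsRing (AbsRing_NormedModule C_AbsRing)) in Hx. subst x.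
    intros eps. destruct (H eps (cond_pos eps)) as [del [Hd Hw]].
    exists (mkposreal _ Hd). intros y Hy.
    apply Hw. exact Hy.
Qed.

Lemma cderiv_elim (f : C -> C) (z l : C) :
  @is_derive C_AbsRing C_NormedModule f z l ->
  forall eps, 0 < eps -> exists del, 0 < del /\ forall w, Cmod (w - z) < del ->
     Cmod (f w - f z - (w - z) * l) <= eps * Cmod (w - z).
Proof.
  intros [_ H] eps Heps.
  assert (Hz : @is_filter_lim (AbsRing_NormedModule C_AbsRing) (@locally (AbsRing_UniformSpace C_AbsRing) z) z) by (intros P HP; exact HP).
  destruct (H z Hz (mkposreal _ Heps)) as [del Hd].
  exists del. split; [apply cond_pos|]. intros w Hw.
  apply (Hd w Hw).
Qed.


Lemma Cmod_Re_Im_le (w : C) : Rabs (Re w) <= Cmod w /\ Rabs (Im w) <= Cmod w.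
Proof.
  split; [apply re_le_Cmod|].
  destruct w as [x y]; unfold Cmod; simpl.
  rewrite <- sqrt_Rsqr_abs. apply sqrt_le_1_alt. unfold Rsqr. nra.
Qed.

Lemma Cmod_le_sum (w : C) : Cmod w <= Rabs (Re w) + Rabs (Im w).
Proof.
  destruct w as [x y]; unfold Cmod; simpl.
  rewrite <- (sqrt_Rsqr (Rabs x + Rabs y)) by (pose proof (Rabs_pos x); pose proof (Rabs_pos y); lra).
  apply sqrt_le_1_alt. unfold Rsqr.
  pose proof (Rabs_pos x); pose proof (Rabs_pos y).
  assert (x^2 = Rabs x * Rabs x) by (rewrite <- Rabs_mult; rewrite Rabs_right; [ring| nra]).
  assert (y^2 = Rabs y * Rabs y) by (rewrite <- Rabs_mult; rewrite Rabs_right; [ring| nra]).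
  nra.
Qed.

Lemma mvt_bound (f df : R -> R) (x M : R) :
  (forall c, Rabs c <= Rabs x -> derivable_pt_lim f c (df c)) ->
  (forall c, Rabs c <= Rabs x -> Rabs (df c) <= M) ->
  Rabs (f x - f 0) <= M * Rabs x.
Proof.
  intros Hd Hb.
  destruct (Rtotal_order x 0) as [Hx|[Hx|Hx]].
  - destruct (MVT_cor2 f df x 0 Hx) as [c [Hc1 Hc2]].
    + intros c Hc. apply Hd. rewrite (Rabs_left1 x) by lra; rewrite (Rabs_left1 c) by lra; lra.
    + assert (Hc: Rabs c <= Rabs x) by (rewrite !Rabs_left by lra; lra).
      specialize (Hb c Hc).
      replace (f x - f 0) with (- (f 0 - f x)) by ring. rewrite Rabs_Ropp, Hc1.
      rewrite Rabs_mult. apply Rmult_le_compat; try apply Rabs_pos; auto.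
      replace (0 - x) with (-x) by ring; rewrite Rabs_Ropp; lra.
  - subst. replace (f 0 - f 0) with 0 by ring. rewrite Rabs_R0. 
    assert (0 <= M) by (specialize (Hb 0 (Rle_refl _)); pose proof (Rabs_pos (df 0)); lra). nra.
  - destruct (MVT_cor2 f df 0 x Hx) as [c [Hc1 Hc2]].
    + intros c Hc. apply Hd. rewrite !Rabs_right by lra. lra.
    + assert (Hc: Rabs c <= Rabs x) by (rewrite !Rabs_right by lra; lra).
      specialize (Hb c Hc).
      rewrite Hc1.
      rewrite Rabs_mult. apply Rmult_le_compat; try apply Rabs_pos; auto.
      rewrite !Rabs_right by lra. lra.
Qed.

Lemma exp_le3 (s : R) : s <= 1 -> exp s <= 3.
Proof. intros. pose proof exp_le_3. destruct (Req_dec s 1); [subst; lra|].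
  assert (exp s < exp 1) by (apply exp_increasing; lra). lra. Qed.

Lemma exp_m1_bound (s : R) : Rabs s <= 1 -> Rabs (exp s - 1) <= 3 * Rabs s.
Proof.
  intros Hs. replace (exp s - 1) with (exp s - exp 0) by (rewrite exp_0; ring).
  apply (mvt_bound exp exp).
  - intros. apply derivable_pt_lim_exp.
  - intros c Hc. rewrite Rabs_right by (left; apply exp_pos). apply exp_le3.
    pose proof (Rle_abs c). lra.
Qed.

Lemma exp_m1_s_bound (s : R) : Rabs s <= 1 -> Rabs (exp s - 1 - s) <= 3 * Rabs s * Rabs s.
Proof.
  intros Hs.
  replace (exp s - 1 - s) with ((fun t => exp t - t) s - (fun t => exp t - t) 0)
    by (simpl; rewrite exp_0; ring).
  apply (mvt_bound (fun t => exp t - t) (fun t => exp t - 1) s).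
  - intros. apply derivable_pt_lim_minus; [apply derivable_pt_lim_exp| apply derivable_pt_lim_id].
  - intros c Hc. apply Rle_trans with (3 * Rabs c); [apply exp_m1_bound; lra|lra].
Qed.

Lemma sin_le_abs (t : R) : Rabs (sin t) <= Rabs t.
Proof.
  replace (sin t) with (sin t - sin 0) by (rewrite sin_0; ring).
  rewrite <- (Rmult_1_l (Rabs t)).
  apply (mvt_bound sin cos).
  - intros. apply derivable_pt_lim_sin.
  - intros. apply Rabs_le. pose proof (COS_bound c). split; apply COS_bound.
Qed.

Lemma cos_m1_bound (t : R) : Rabs (cos t - 1) <= Rabs t * Rabs t.
Proof.
  replace (cos t - 1) with (cos t - cos 0) by (rewrite cos_0; ring).
  apply (mvt_bound cos (fun x => - sin x)).
  - intros. apply derivable_pt_lim_cos.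
  - intros c Hc. rewrite Rabs_Ropp. eapply Rle_trans; [apply sin_le_abs| exact Hc].
Qed.

Lemma cos_m1_bound1 (t : R) : Rabs (cos t - 1) <= Rabs t.
Proof.
  replace (cos t - 1) with (cos t - cos 0) by (rewrite cos_0; ring).
  rewrite <- (Rmult_1_l (Rabs t)).
  apply (mvt_bound cos (fun x => - sin x)).
  - intros. apply derivable_pt_lim_cos.
  - intros c Hc. rewrite Rabs_Ropp. apply Rabs_le. split; apply SIN_bound.
Qed.

Lemma sin_m_bound (t : R) : Rabs (sin t - t) <= Rabs t * Rabs t.
Proof.
  replace (sin t - t) with ((fun x => sin x - x) t - (fun x => sin x - x) 0) by (simpl; rewrite sin_0; ring).
  apply (mvt_bound (fun x => sin x - x) (fun x => cos x - 1) t).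
  - intros. apply derivable_pt_lim_minus; [apply derivable_pt_lim_sin| apply derivable_pt_lim_id].
  - intros c Hc. eapply Rle_trans; [apply cos_m1_bound1|exact Hc].
Qed.


Lemma Cexp_add (u v : C) : Cexp (u + v) = (Cexp u * Cexp v)%C.
Proof.
  destruct u as [a b], v as [c d]. unfold Cexp; simpl.
  rewrite exp_plus, cos_plus, sin_plus.
  apply injective_projections; simpl; ring.
Qed.

Lemma Cmod_Cexp (u : C) : Cmod (Cexp u) = exp (Re u).
Proof.
  destruct u as [s t]. unfold Cexp, Cmod; simpl.
  transitivity (sqrt (exp s ^ 2)); [|apply sqrt_pow2; left; apply exp_pos].
  f_equal. pose proof (sin2_cos2 t). unfold Rsqr in *. nra.
Qed.

Lemma Cexp_err (u : C) : Cmod u <= 1 -> Cmod (Cexp u - 1 - u) <= 10 * Cmod u ^ 2.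
Proof.
  intros Hu. rewrite Cmod2_alt.
  destruct (Cmod_Re_Im_le u) as [H1 H2].
  eapply Rle_trans; [apply Cmod_le_sum|].
  destruct u as [s t]. unfold Cexp; simpl in *.
  assert (Hs : Rabs s <= 1) by lra. assert (Ht : Rabs t <= 1) by lra.
  pose proof (exp_m1_s_bound s Hs). pose proof (exp_m1_bound s Hs).
  pose proof (cos_m1_bound t). pose proof (sin_m_bound t).
  assert (He : 0 < exp s <= 3) by (split; [apply exp_pos| apply exp_le3; pose proof (Rle_abs s); lra]).
  assert (E1 : Rabs (exp s * cos t - 1 - s) <= 3 * (Rabs t * Rabs t) + 3 * Rabs s * Rabs s).
  { replace (exp s * cos t - 1 - s) with (exp s * (cos t - 1) + (exp s - 1 - s)) by ring.
    eapply Rle_trans; [apply Rabs_triang|]. rewrite Rabs_mult, (Rabs_right (exp s)) by lra.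
    apply Rplus_le_compat; [apply Rmult_le_compat; try lra; apply Rabs_pos| lra]. }
  assert (E2 : Rabs (exp s * sin t - 0 - t) <= 3 * (Rabs t * Rabs t) + (3 * Rabs s) * Rabs t).
  { replace (exp s * sin t - 0 - t) with (exp s * (sin t - t) + (exp s - 1) * t) by ring.
    eapply Rle_trans; [apply Rabs_triang|]. rewrite !Rabs_mult, (Rabs_right (exp s)) by lra.
    apply Rplus_le_compat; apply Rmult_le_compat; try lra; try apply Rabs_pos. }
  assert (Q1 : Rabs s * Rabs s = s ^ 2) by (rewrite <- Rabs_mult; rewrite Rabs_right; [ring| nra]).
  assert (Q2 : Rabs t * Rabs t = t ^ 2) by (rewrite <- Rabs_mult; rewrite Rabs_right; [ring| nra]).
  pose proof (Rabs_pos s); pose proof (Rabs_pos t).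
  replace (Rabs (exp s * cos t - 1 - s)) with (Rabs (exp s * cos t - 1 - s)) by reflexivity.
  match goal with |- Rabs ?A + Rabs ?B <= _ => 
    replace A with (exp s * cos t - 1 - s) by ring; replace B with (exp s * sin t - 0 - t) by ring end.
  nra.
Qed.


Lemma Re_minus (w z : C) : Re (w - z) = Re w - Re z.
Proof. destruct w, z; simpl; ring. Qed.
Lemma Im_minus (w z : C) : Im (w - z) = Im w - Im z.
Proof. destruct w, z; simpl; ring. Qed.

Lemma cont2_C (f : R -> R -> R) (z : C) :
  continuity_2d_pt f (Re z) (Im z) ->
  forall eps, 0 < eps -> exists del, 0 < del /\ forall w, Cmod (w - z) < del ->
    Rabs (f (Re w) (Im w) - f (Re z) (Im z)) < eps.
Proof.
  intros Hc eps He. destruct (Hc (mkposreal _ He)) as [d Hd].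
  exists d. split; [apply cond_pos|]. intros w Hw.
  destruct (Cmod_Re_Im_le (w - z)) as [H1 H2].
  rewrite Re_minus in H1; rewrite Im_minus in H2.
  apply Hd; lra.
Qed.

Lemma cont_ln (x : R) : 0 < x -> continuity_pt ln x.
Proof. intros H. apply derivable_continuous_pt. exists (/ x). apply derivable_pt_lim_ln; exact H. Qed.

Lemma cont_atan (x : R) : continuity_pt atan x.
Proof. apply derivable_continuous_pt. exists (/ (1 + x^2)). apply derivable_pt_lim_atan. Qed.

Lemma Carg_pos (z : C) : 0 < Re z -> Carg z = atan (Im z / Re z).
Proof. intros H. unfold Carg. destruct (Rlt_dec 0 (Re z)); [reflexivity| lra]. Qed.

Lemma Cmod_pos_re (z : C) : 0 < Re z -> 0 < Cmod z.
Proof. intros H. pose proof (re_le_Cmod z). pose proof (Rle_abs (Re z)). lra. Qed.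

Lemma Cexp_Clog (z : C) : 0 < Re z -> Cexp (Clog z) = z.
Proof.
  intros H. unfold Clog, Cexp. simpl. rewrite Carg_pos by exact H.
  rewrite exp_ln by (apply Cmod_pos_re; exact H).
  rewrite cos_atan, sin_atan.
  destruct z as [x y]; simpl in *.
  assert (Hs : Cmod (x, y) = x * sqrt (1 + (y / x)²)).
  { unfold Cmod; simpl. transitivity (sqrt (x ^ 2) * sqrt (1 + (y / x)²)).
    - rewrite <- sqrt_mult_alt by nra. f_equal. unfold Rsqr. field. lra.
    - rewrite sqrt_pow2 by lra. reflexivity. }
  assert (0 < sqrt (1 + (y / x)²)) by (apply sqrt_lt_R0; pose proof (Rle_0_sqr (y/x)); lra).
  rewrite Hs. apply injective_projections; simpl; field; lra.
Qed.

Lemma Clog_cont (z : C) : 0 < Re z ->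
  forall eps, 0 < eps -> exists del, 0 < del /\ forall w, Cmod (w - z) < del ->
    Cmod (Clog w - Clog z) < eps.
Proof.
  intros Hz eps He.
  assert (He2 : 0 < eps / 2) by lra.
  assert (Hc1 : continuity_2d_pt (fun x y => ln (sqrt (x ^ 2 + y ^ 2))) (Re z) (Im z)).
  { apply continuity_1d_2d_pt_comp.
    - apply cont_ln. apply sqrt_lt_R0. pose proof (pow2_ge_0 (Im z)). nra.
    - apply continuity_1d_2d_pt_comp.
      + apply continuity_pt_sqrt. pose proof (pow2_ge_0 (Im z)). nra.
      + simpl. apply continuity_2d_pt_plus; apply continuity_2d_pt_mult;
        try apply continuity_2d_pt_id1; try apply continuity_2d_pt_id2;
        try apply continuity_2d_pt_mult; try apply continuity_2d_pt_id1;
        try apply continuity_2d_pt_id2; apply continuity_2d_pt_const. }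
  assert (Hc2 : continuity_2d_pt (fun x y => atan (y / x)) (Re z) (Im z)).
  { apply continuity_1d_2d_pt_comp. apply cont_atan.
    apply continuity_2d_pt_mult. apply continuity_2d_pt_id2.
    apply continuity_2d_pt_inv. apply continuity_2d_pt_id1. lra. }
  destruct (cont2_C _ z Hc1 _ He2) as [d1 [Hd1 H1]].
  destruct (cont2_C _ z Hc2 _ He2) as [d2 [Hd2 H2]].
  exists (Rmin (Re z) (Rmin d1 d2)). split.
  { apply Rmin_pos; [lra| apply Rmin_pos; lra]. }
  intros w Hw.
  assert (Hw1 : Cmod (w - z) < d1) by (eapply Rlt_le_trans; [exact Hw|]; eapply Rle_trans; [apply Rmin_r| apply Rmin_l]).
  assert (Hw2 : Cmod (w - z) < d2) by (eapply Rlt_le_trans; [exact Hw|]; eapply Rle_trans; [apply Rmin_r| apply Rmin_r]).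
  assert (Hw3 : Cmod (w - z) < Re z) by (eapply Rlt_le_trans; [exact Hw| apply Rmin_l]).
  assert (Hrw : 0 < Re w).
  { destruct (Cmod_Re_Im_le (w - z)) as [Q _]. rewrite Re_minus in Q.
    pose proof (Rle_abs (- (Re w - Re z))). rewrite Rabs_Ropp in *. lra. }
  specialize (H1 w Hw1). specialize (H2 w Hw2).
  eapply Rle_lt_trans; [apply Cmod_le_sum|].
  unfold Clog; simpl. rewrite !Carg_pos by assumption.
  assert (E : forall u : C, Cmod u = sqrt (Re u ^ 2 + Im u ^ 2)) by (intros; reflexivity).
  rewrite !E. unfold Rminus in H1, H2. lra.
Qed.


Lemma Cexp_deriv (z : C) : @is_derive C_AbsRing C_NormedModule Cexp z (Cexp z).
Proof.
  apply cderiv_intro. intros eps He.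
  set (K := exp (Re z)). assert (HK : 0 < K) by apply exp_pos.
  exists (Rmin 1 (eps / (10 * K))). split.
  { apply Rmin_pos; [lra| apply Rdiv_lt_0_compat; lra]. }
  intros w Hw. set (h := (w - z)%C).
  assert (Ew : Cexp w = (Cexp z * Cexp h)%C).
  { rewrite <- Cexp_add. f_equal. unfold h. ring. }
  rewrite Ew.
  replace (Cexp z * Cexp h - Cexp z - h * Cexp z)%C with (Cexp z * (Cexp h - 1 - h))%C by ring.
  rewrite Cmod_mult, Cmod_Cexp. fold K.
  assert (H1 : Cmod h <= 1) by (pose proof (Rmin_l 1 (eps / (10 * K))); unfold h; lra).
  assert (H2 : Cmod h <= eps / (10 * K)) by (pose proof (Rmin_r 1 (eps / (10 * K))); unfold h; lra).
  pose proof (Cexp_err h H1). pose proof (Cmod_ge_0 h).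
  assert (10 * K * Cmod h <= eps).
  { apply (Rmult_le_compat_l (10 * K)) in H2; [|lra]. 
    replace (10 * K * (eps / (10 * K))) with eps in H2 by (field; lra). lra. }
  apply Rle_trans with (K * (10 * Cmod h ^ 2)).
  { apply Rmult_le_compat_l; lra. }
  simpl. nra.
Qed.

Lemma re_pos_near (z w : C) : Cmod (w - z) < Re z -> 0 < Re w.
Proof.
  intros H. destruct (Cmod_Re_Im_le (w - z)) as [Q _]. rewrite Re_minus in Q.
  pose proof (Rle_abs (- (Re w - Re z))). rewrite Rabs_Ropp in *. lra.
Qed.

Lemma Cmod_sub_ge (u v : C) : Cmod u - Cmod v <= Cmod (u - v).
Proof.
  pose proof (Cmod_triangle (u - v) v).
  replace (u - v + v)%C with u in H by ring. lra.
Qed.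

Lemma Clog_deriv (z : C) : 0 < Re z -> @is_derive C_AbsRing C_NormedModule Clog z (/ z)%C.
Proof.
  intros Hz. apply cderiv_intro. intros eps He.
  assert (Hmz : 0 < Cmod z) by (apply Cmod_pos_re; exact Hz).
  assert (Hz0 : z <> 0%C) by (intro E; rewrite E, Cmod_0 in Hmz; lra).
  set (e1 := Rmin (1/20) (eps * Cmod z / 20)).
  assert (He1 : 0 < e1) by (apply Rmin_pos; [lra| apply Rdiv_lt_0_compat; [nra|lra]]).
  destruct (Clog_cont z Hz e1 He1) as [d [Hd Hcont]].
  exists (Rmin d (Re z)). split; [apply Rmin_pos; lra|].
  intros w Hw.
  assert (Hwd : Cmod (w - z) < d) by (pose proof (Rmin_l d (Re z)); lra).
  assert (Hwr : 0 < Re w) by (apply (re_pos_near z); pose proof (Rmin_r d (Re z)); lra).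
  set (A := (Clog w - Clog z)%C).
  assert (HA : Cmod A < e1) by (apply Hcont; exact Hwd).
  assert (HA1 : Cmod A <= 1/20) by (pose proof (Rmin_l (1/20) (eps * Cmod z / 20)); unfold e1 in HA; lra).
  assert (HA2 : Cmod A <= eps * Cmod z / 20) by (pose proof (Rmin_r (1/20) (eps * Cmod z / 20)); unfold e1 in HA; lra).
  assert (Ew : w = (z * Cexp A)%C).
  { rewrite <- (Cexp_Clog z Hz) at 1. rewrite <- Cexp_add.
    unfold A. replace (Clog z + (Clog w - Clog z))%C with (Clog w) by ring.
    symmetry. apply Cexp_Clog. exact Hwr. }
  assert (Eerr : (A - (w - z) * / z)%C = (- (Cexp A - 1 - A))%C).
  { rewrite Ew at 1. field. exact Hz0. }
  rewrite Eerr, Cmod_opp.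
  pose proof (Cexp_err A ltac:(lra)) as HE. pose proof (Cmod_ge_0 A).
  assert (Hwz : Cmod (w - z) = Cmod z * Cmod (Cexp A - 1)).
  { rewrite <- Cmod_mult. f_equal. rewrite Ew. ring. }
  assert (HlowA : Cmod A / 2 <= Cmod (Cexp A - 1)).
  { pose proof (Cmod_sub_ge A (A - (Cexp A - 1))%C).
    replace (A - (A - (Cexp A - 1)))%C with (Cexp A - 1)%C in H0 by ring.
    replace (A - (Cexp A - 1))%C with (- (Cexp A - 1 - A))%C in H0 by ring.
    rewrite Cmod_opp in H0. simpl in HE. nra. }
  assert (HAw : Cmod A <= 2 * Cmod (w - z) / Cmod z).
  { rewrite Hwz. apply (Rmult_le_reg_l (Cmod z)); [lra|].
    replace (Cmod z * (2 * (Cmod z * Cmod (Cexp A - 1)) / Cmod z)) with (2 * (Cmod z * Cmod (Cexp A - 1))) by (field; lra).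
    nra. }
  eapply Rle_trans; [exact HE|].
  simpl. rewrite Rmult_1_r.
  assert (Cmod A * Cmod A <= (eps * Cmod z / 20) * (2 * Cmod (w - z) / Cmod z)).
  { apply Rmult_le_compat; lra. }
  replace (eps * Cmod z / 20 * (2 * Cmod (w - z) / Cmod z)) with (eps * Cmod (w - z) / 10) in H0 by (field; lra).
  lra.
Qed.


Lemma Re_RtoC_mult (h : R) (u : C) : Re (RtoC h * u) = h * Re u.
Proof. destruct u; simpl; ring. Qed.
Lemma Re_plus (u v : C) : Re (u + v) = Re u + Re v.
Proof. destruct u, v; simpl; ring. Qed.
Lemma Im_plus (u v : C) : Im (u + v) = Im u + Im v.
Proof. destruct u, v; simpl; ring. Qed.
Lemma Cmod_RtoC_mult (h : R) (u : C) : Cmod (RtoC h * u) = Rabs h * Cmod u.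
Proof. rewrite Cmod_mult, Cmod_R. reflexivity. Qed.

Lemma line_deriv (f : C -> C) (z0 d k l : C) (t : R) :
  @is_derive C_AbsRing C_NormedModule f (z0 + RtoC t * d)%C l ->
  derivable_pt_lim (fun s => Re (k * f (z0 + RtoC s * d)%C)%C) t (Re (k * (d * l))%C).
Proof.
  intros Hd eps He.
  set (K := (Cmod k + 1) * (Cmod d + 1)).
  assert (HK : 0 < K) by (unfold K; pose proof (Cmod_ge_0 k); pose proof (Cmod_ge_0 d); nra).
  destruct (cderiv_elim _ _ _ Hd (eps / (2 * K))) as [del [Hdel Hw]].
  { apply Rdiv_lt_0_compat; lra. }
  assert (Hdd : 0 < del / (Cmod d + 1)) by (apply Rdiv_lt_0_compat; [lra| pose proof (Cmod_ge_0 d); lra]).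
  exists (mkposreal _ Hdd). intros h Hh0 Hh. simpl in Hh.
  set (zt := (z0 + RtoC t * d)%C).
  set (w := (z0 + RtoC (t + h) * d)%C).
  assert (Ewz : (w - zt)%C = (RtoC h * d)%C).
  { unfold w, zt. rewrite RtoC_plus. ring. }
  assert (Hwz : Cmod (w - zt) < del).
  { rewrite Ewz, Cmod_RtoC_mult. pose proof (Cmod_ge_0 d).
    apply Rlt_le_trans with (del / (Cmod d + 1) * (Cmod d + 1)); [|right; field; lra].
    pose proof (Rabs_pos h). apply Rle_lt_trans with (Rabs h * (Cmod d + 1)); [nra|].
    apply Rmult_lt_compat_r; lra. }
  specialize (Hw w Hwz). fold zt in Hw. rewrite Ewz, Cmod_RtoC_mult in Hw.
  fold zt w.
  assert (E : Re (k * f w)%C - Re (k * f zt)%C - h * Re (k * (d * l))%C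
              = Re (k * (f w - f zt - RtoC h * d * l))%C).
  { rewrite <- Re_RtoC_mult, <- !Re_minus. f_equal. ring. }
  replace ((Re (k * f w)%C - Re (k * f zt)%C) / h - Re (k * (d * l))%C)
    with ((Re (k * f w)%C - Re (k * f zt)%C - h * Re (k * (d * l))%C) / h) by (field; exact Hh0).
  rewrite E. unfold Rdiv. rewrite Rabs_mult, Rabs_inv.
  assert (Hh1 : 0 < Rabs h) by (apply Rabs_pos_lt; exact Hh0).
  apply Rle_lt_trans with (Cmod k * (eps / (2 * K) * (Rabs h * Cmod d)) * / Rabs h).
  { apply Rmult_le_compat_r; [left; apply Rinv_0_lt_compat; lra|].
    eapply Rle_trans; [apply re_le_Cmod|]. rewrite Cmod_mult.
    apply Rmult_le_compat_l; [apply Cmod_ge_0| exact Hw]. }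
  replace (Cmod k * (eps / (2 * K) * (Rabs h * Cmod d)) * / Rabs h)
    with (eps / 2 * (Cmod k * Cmod d / K)) by (unfold K; field; split; [lra|]; pose proof (Cmod_ge_0 k); pose proof (Cmod_ge_0 d); nra).
  assert (Cmod k * Cmod d / K < 1).
  { unfold K. pose proof (Cmod_ge_0 k); pose proof (Cmod_ge_0 d).
    apply (Rmult_lt_reg_r ((Cmod k + 1) * (Cmod d + 1))); [nra|].
    field_simplify; nra. }
  pose proof (Cmod_ge_0 k); pose proof (Cmod_ge_0 d).
  assert (0 <= Cmod k * Cmod d / K) by (apply Rmult_le_pos; [nra| left; apply Rinv_0_lt_compat; lra]).
  nra.
Qed.

Lemma mvi (f df : C -> C) (D : C -> Prop) (M : R) :
  (forall z, D z -> @is_derive C_AbsRing C_NormedModule f z (df z)) ->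
  (forall z, D z -> Cmod (df z) <= M) ->
  forall z0 z1, (forall t, 0 <= t <= 1 -> D (z0 + RtoC t * (z1 - z0))%C) ->
  Cmod (f z1 - f z0) <= M * Cmod (z1 - z0).
Proof.
  intros Hd Hb z0 z1 Hseg.
  set (c := (f z1 - f z0)%C). set (d := (z1 - z0)%C).
  assert (HM : 0 <= M).
  { pose proof (Hb _ (Hseg 0 ltac:(lra))). pose proof (Cmod_ge_0 (df (z0 + RtoC 0 * (z1 - z0))%C)). lra. }
  set (g := fun s => Re (Cconj c * f (z0 + RtoC s * d))%C).
  destruct (MVT_cor2 g (fun s => Re (Cconj c * (d * df (z0 + RtoC s * d)%C))%C) 0 1) as [tau [Htau1 Htau2]].
  { lra. }
  { intros s Hs. unfold g. apply line_deriv. apply Hd. apply Hseg. exact Hs. }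
  assert (Eg1 : g 1 = Re (Cconj c * f z1)%C).
  { unfold g. do 3 f_equal. unfold d. ring. }
  assert (Eg0 : g 0 = Re (Cconj c * f z0)%C).
  { unfold g. do 3 f_equal. unfold d. ring. }
  rewrite Eg1, Eg0 in Htau1. replace (1 - 0) with 1 in Htau1 by ring. rewrite Rmult_1_r in Htau1.
  assert (Ec : Re (Cconj c * f z1)%C - Re (Cconj c * f z0)%C = Cmod c ^ 2).
  { rewrite <- Re_minus, Cmod2_alt.
    replace (Cconj c * f z1 - Cconj c * f z0)%C with (c * Cconj c)%C by (unfold c; ring).
    destruct c; simpl; ring. }
  rewrite Ec in Htau1.
  assert (Hle : Cmod c ^ 2 <= Cmod c * (Cmod d * M)).
  { rewrite Htau1. eapply Rle_trans; [apply Rle_abs|]. eapply Rle_trans; [apply re_le_Cmod|].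
    rewrite !Cmod_mult, Cmod_conj. 
    apply Rmult_le_compat_l; [apply Cmod_ge_0|]. apply Rmult_le_compat_l; [apply Cmod_ge_0|].
    apply Hb. apply Hseg. lra. }
  pose proof (Cmod_ge_0 c). pose proof (Cmod_ge_0 d).
  fold c d.
  destruct (Req_dec (Cmod c) 0) as [Hc0|Hc0]; [rewrite Hc0; nra|].
  assert (0 < Cmod c) by lra. simpl in Hle. nra.
Qed.


Definition CD (f : C -> C) (z l : C) : Prop :=
  forall eps, 0 < eps -> exists del, 0 < del /\ forall w, Cmod (w - z) < del ->
     Cmod (f w - f z - (w - z) * l) <= eps * Cmod (w - z).

Lemma CD_eq f z l l' : CD f z l -> l = l' -> CD f z l'.
Proof. intros H E; subst; exact H. Qed.

Lemma CD_ext f g z l : (forall w, f w = g w) -> CD f z l -> CD g z l.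
Proof. intros E H eps He. destruct (H eps He) as [d [Hd Hw]]. exists d. split; auto.
  intros w Hw'. rewrite <- !E. auto. Qed.

Lemma CD_id z : CD (fun w => w) z 1%C.
Proof. intros eps He. exists 1. split; [lra|]. intros w _.
  replace (w - z - (w - z) * 1)%C with (RtoC 0) by ring. rewrite Cmod_0.
  pose proof (Cmod_ge_0 (w - z)). nra. Qed.

Lemma CD_const c z : CD (fun _ => c) z (RtoC 0).
Proof. intros eps He. exists 1. split; [lra|]. intros w _.
  replace (c - c - (w - z) * 0)%C with (RtoC 0) by ring. rewrite Cmod_0.
  pose proof (Cmod_ge_0 (w - z)). nra. Qed.

Lemma CD_plus f g z lf lg : CD f z lf -> CD g z lg -> CD (fun w => f w + g w)%C z (lf + lg)%C.
Proof.
  intros Hf Hg eps He.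
  destruct (Hf (eps/2) ltac:(lra)) as [d1 [Hd1 H1]].
  destruct (Hg (eps/2) ltac:(lra)) as [d2 [Hd2 H2]].
  exists (Rmin d1 d2). split; [apply Rmin_pos; lra|]. intros w Hw.
  specialize (H1 w ltac:(pose proof (Rmin_l d1 d2); lra)).
  specialize (H2 w ltac:(pose proof (Rmin_r d1 d2); lra)).
  replace (f w + g w - (f z + g z) - (w - z) * (lf + lg))%C
    with ((f w - f z - (w - z) * lf) + (g w - g z - (w - z) * lg))%C by ring.
  eapply Rle_trans; [apply Cmod_triangle|]. lra.
Qed.

Lemma CD_scal c f z l : CD f z l -> CD (fun w => c * f w)%C z (c * l)%C.
Proof.
  intros Hf eps He.
  destruct (Hf (eps / (Cmod c + 1))) as [d [Hd H1]].
  { apply Rdiv_lt_0_compat; [lra| pose proof (Cmod_ge_0 c); lra]. }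
  exists d. split; auto. intros w Hw. specialize (H1 w Hw).
  replace (c * f w - c * f z - (w - z) * (c * l))%C with (c * (f w - f z - (w - z) * l))%C by ring.
  rewrite Cmod_mult. pose proof (Cmod_ge_0 c). pose proof (Cmod_ge_0 (w - z)).
  apply Rle_trans with (Cmod c * (eps / (Cmod c + 1) * Cmod (w - z))).
  { apply Rmult_le_compat_l; lra. }
  assert (Cmod c / (Cmod c + 1) <= 1).
  { apply (Rmult_le_reg_r (Cmod c + 1)); [lra|]. field_simplify; lra. }
  replace (Cmod c * (eps / (Cmod c + 1) * Cmod (w - z))) with (Cmod c / (Cmod c + 1) * (eps * Cmod (w - z))) by (field; lra).
  assert (0 <= eps * Cmod (w - z)) by nra.
  assert (0 <= Cmod c / (Cmod c + 1)) by (apply Rdiv_le_0_compat; lra).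
  nra.
Qed.

Lemma CD_lip f z l : CD f z l -> exists del, 0 < del /\ forall w, Cmod (w - z) < del ->
  Cmod (f w - f z) <= (Cmod l + 1) * Cmod (w - z).
Proof.
  intros Hf. destruct (Hf 1 ltac:(lra)) as [d [Hd H1]]. exists d. split; auto.
  intros w Hw. specialize (H1 w Hw).
  pose proof (Cmod_triangle (f w - f z - (w - z) * l) ((w - z) * l)).
  replace (f w - f z - (w - z) * l + (w - z) * l)%C with (f w - f z)%C in H by ring.
  rewrite Cmod_mult in H. nra.
Qed.

Lemma CD_comp f g z dg df : CD g z dg -> CD f (g z) df -> CD (fun w => f (g w)) z (dg * df)%C.
Proof.
  intros Hg Hf eps He.
  pose proof (Cmod_ge_0 dg) as Hdg. pose proof (Cmod_ge_0 df) as Hdf.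
  destruct (CD_lip g z dg Hg) as [d1 [Hd1 H1]].
  destruct (Hf (eps / (2 * (Cmod dg + 1)))) as [d2 [Hd2 H2]].
  { apply Rdiv_lt_0_compat; lra. }
  destruct (Hg (eps / (2 * (Cmod df + 1)))) as [d3 [Hd3 H3]].
  { apply Rdiv_lt_0_compat; lra. }
  set (d := Rmin d1 (Rmin (d2 / (Cmod dg + 1)) d3)).
  assert (Hd : 0 < d) by (apply Rmin_pos; [lra| apply Rmin_pos; [apply Rdiv_lt_0_compat|]; lra]).
  exists d. split; auto. intros w Hw.
  assert (Hw1 : Cmod (w - z) < d1) by (pose proof (Rmin_l d1 (Rmin (d2 / (Cmod dg + 1)) d3)); unfold d in Hw; lra).
  assert (Hw2 : Cmod (w - z) < d2 / (Cmod dg + 1)) by (pose proof (Rmin_r d1 (Rmin (d2 / (Cmod dg + 1)) d3)); pose proof (Rmin_l (d2 / (Cmod dg + 1)) d3); unfold d in Hw; lra).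
  assert (Hw3 : Cmod (w - z) < d3) by (pose proof (Rmin_r d1 (Rmin (d2 / (Cmod dg + 1)) d3)); pose proof (Rmin_r (d2 / (Cmod dg + 1)) d3); unfold d in Hw; lra).
  specialize (H1 w Hw1). specialize (H3 w Hw3).
  pose proof (Cmod_ge_0 (w - z)) as Hwz.
  assert (Hgw : Cmod (g w - g z) < d2).
  { eapply Rle_lt_trans; [exact H1|].
    apply Rmult_lt_reg_r with (/ (Cmod dg + 1)); [apply Rinv_0_lt_compat; lra|].
    replace ((Cmod dg + 1) * Cmod (w - z) * / (Cmod dg + 1)) with (Cmod (w - z)) by (field; lra).
    exact Hw2. }
  specialize (H2 (g w) Hgw).
  replace (f (g w) - f (g z) - (w - z) * (dg * df))%C
    with ((f (g w) - f (g z) - (g w - g z) * df) + (g w - g z - (w - z) * dg) * df)%C by ring.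
  eapply Rle_trans; [apply Cmod_triangle|]. rewrite Cmod_mult.
  assert (A1 : eps / (2 * (Cmod dg + 1)) * Cmod (g w - g z) <= eps / 2 * Cmod (w - z)).
  { apply Rle_trans with (eps / (2 * (Cmod dg + 1)) * ((Cmod dg + 1) * Cmod (w - z))).
    - apply Rmult_le_compat_l; [left; apply Rdiv_lt_0_compat; lra| exact H1].
    - right. field. lra. }
  assert (A2 : Cmod (g w - g z - (w - z) * dg) * Cmod df <= eps / 2 * Cmod (w - z)).
  { apply Rle_trans with (eps / (2 * (Cmod df + 1)) * Cmod (w - z) * Cmod df).
    - apply Rmult_le_compat_r; auto.
    - assert (Cmod df / (Cmod df + 1) <= 1).
      { apply (Rmult_le_reg_r (Cmod df + 1)); [lra|]. field_simplify; lra. }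
      replace (eps / (2 * (Cmod df + 1)) * Cmod (w - z) * Cmod df) with (Cmod df / (Cmod df + 1) * (eps / 2 * Cmod (w - z))) by (field; lra).
      assert (0 <= eps / 2 * Cmod (w - z)) by nra.
      assert (0 <= Cmod df / (Cmod df + 1)) by (apply Rdiv_le_0_compat; lra).
      nra. }
  lra.
Qed.

Lemma CD_of (f : C -> C) z l : @is_derive C_AbsRing C_NormedModule f z l -> CD f z l.
Proof. intros H. exact (cderiv_elim f z l H). Qed.
Lemma CD_to (f : C -> C) z l : CD f z l -> @is_derive C_AbsRing C_NormedModule f z l.
Proof. intros H. apply cderiv_intro. exact H. Qed.


Definition Lf (w : C) : C := Clog (w + RtoC 3).
Definition Qf (a : R) (w : C) : C := Cexp (RtoC a * Clog (Lf w)).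
Definition dQ (a : R) (w : C) : C := ((RtoC a * (/ (w + RtoC 3) * / Lf w)) * Qf a w)%C.

Lemma Cmod_ge_Re (u : C) : Re u <= Cmod u.
Proof. pose proof (re_le_Cmod u). pose proof (Rle_abs (Re u)). lra. Qed.

Lemma ln3_ge1 : 1 <= ln 3.
Proof. rewrite <- ln_exp at 1. apply ln_le; [apply exp_pos| apply exp_le_3]. Qed.

Lemma Re_L (w : C) : -2 < Re w -> 0 < Re (Lf w).
Proof.
  intros H. unfold Lf, Clog; simpl.
  assert (1 < Cmod (w + RtoC 3)).
  { eapply Rlt_le_trans; [|apply Cmod_ge_Re]. rewrite Re_plus. simpl. lra. }
  rewrite <- ln_1. apply ln_increasing; lra.
Qed.

Lemma Re_L1 (w : C) : 0 <= Re w -> 1 <= Re (Lf w).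
Proof.
  intros H. unfold Lf, Clog; simpl.
  assert (3 <= Cmod (w + RtoC 3)).
  { eapply Rle_trans; [|apply Cmod_ge_Re]. rewrite Re_plus. simpl. lra. }
  eapply Rle_trans; [apply ln3_ge1|]. apply ln_le; lra.
Qed.

Lemma nonzero_of_Re (u : C) : 0 < Re u -> u <> RtoC 0.
Proof. intros H E. rewrite E in H. simpl in H. lra. Qed.

Lemma Lf_CD (w : C) : -2 < Re w -> CD Lf w (/ (w + RtoC 3))%C.
Proof.
  intros H. unfold Lf.
  eapply CD_eq.
  - apply (CD_comp Clog (fun w => w + RtoC 3)%C).
    + apply CD_plus; [apply CD_id| apply CD_const].
    + apply CD_of. apply Clog_deriv. rewrite Re_plus; simpl; lra.
  - ring.
Qed.

Lemma Qf_CD (a : R) (w : C) : -2 < Re w -> CD (Qf a) w (dQ a w).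
Proof.
  intros H. unfold Qf, dQ.
  apply (CD_comp Cexp (fun w => RtoC a * Clog (Lf w))%C).
  - apply CD_scal. apply (CD_comp Clog Lf).
    + apply Lf_CD; exact H.
    + apply CD_of. apply Clog_deriv. apply Re_L; exact H.
  - apply CD_of. apply Cexp_deriv.
Qed.

Lemma Cmod_L_pos (w : C) : -2 < Re w -> 0 < Cmod (Lf w).
Proof. intros H. apply Cmod_pos_re. apply Re_L; exact H. Qed.

Lemma Cpow_Qf (a : R) (w : C) : -2 < Re w -> Defs.Cpow (Lf w) a = Qf a w.
Proof.
  intros H. unfold Defs.Cpow. destruct (Req_EM_T (Cmod (Lf w)) 0) as [E|E].
  - pose proof (Cmod_L_pos w H). lra.
  - reflexivity.
Qed.

Lemma eta_Qf (a : R) (w : C) : -2 < Re w -> eta a w = (w - Qf a w)%C.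
Proof. intros H. unfold eta. fold (Lf w). rewrite Cpow_Qf by exact H. reflexivity. Qed.

Lemma Qf_mod (a : R) (w : C) : -2 < Re w -> Cmod (Qf a w) = Rpower (Cmod (Lf w)) a.
Proof.
  intros H. unfold Qf. rewrite Cmod_Cexp, Re_RtoC_mult. unfold Rpower. f_equal.
Qed.

Lemma Cmod_Lf_ge1 (w : C) : 0 <= Re w -> 1 <= Cmod (Lf w).
Proof. intros H. eapply Rle_trans; [apply Re_L1; exact H| apply Cmod_ge_Re]. Qed.

Lemma Rpower_le_self (x a : R) : 1 <= x -> a <= 1 -> Rpower x a <= x.
Proof. intros Hx Ha. rewrite <- (Rpower_1 x) at 2 by lra. apply Rle_Rpower; lra. Qed.

Lemma dQ_bound (a : R) (w : C) : 0 < a < 1 -> 0 <= Re w -> Cmod (dQ a w) <= 1/3.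
Proof.
  intros Ha H. unfold dQ.
  assert (H3 : 3 <= Cmod (w + RtoC 3)).
  { eapply Rle_trans; [|apply Cmod_ge_Re]. rewrite Re_plus. simpl. lra. }
  pose proof (Cmod_Lf_ge1 w H) as HL.
  assert (Hw3 : (w + RtoC 3)%C <> RtoC 0) by (intro E; rewrite E, Cmod_0 in H3; lra).
  assert (HL0 : Lf w <> RtoC 0) by (intro E; rewrite E, Cmod_0 in HL; lra).
  rewrite !Cmod_mult, Cmod_inv by exact Hw3. rewrite Cmod_inv by exact HL0.
  rewrite Qf_mod by lra. rewrite Cmod_R, Rabs_right by lra.
  pose proof (Rpower_le_self (Cmod (Lf w)) a HL ltac:(lra)).
  assert (0 < Rpower (Cmod (Lf w)) a) by (unfold Rpower; apply exp_pos).
  assert (/ Cmod (w + RtoC 3) <= 1/3) by (apply Rle_trans with (/3); [apply Rinv_le_contravar; lra| lra]).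
  assert (0 < / Cmod (w + RtoC 3)) by (apply Rinv_0_lt_compat; lra).
  assert (Rpower (Cmod (Lf w)) a * / Cmod (Lf w) <= 1).
  { apply (Rmult_le_reg_r (Cmod (Lf w))); [lra|]. rewrite Rmult_assoc, Rinv_l by lra. lra. }
  assert (0 < / Cmod (Lf w)) by (apply Rinv_0_lt_compat; lra).
  replace (a * (/ Cmod (w + RtoC 3) * / Cmod (Lf w)) * Rpower (Cmod (Lf w)) a)
    with (a * / Cmod (w + RtoC 3) * (Rpower (Cmod (Lf w)) a * / Cmod (Lf w))) by ring.
  assert (0 <= a * / Cmod (w + RtoC 3) <= 1/3) by (split; nra).
  nra.
Qed.

Lemma Q_lip (a : R) (z0 z1 : C) : 0 < a < 1 -> 0 <= Re z0 -> 0 <= Re z1 ->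
  Cmod (Qf a z1 - Qf a z0) <= 1/3 * Cmod (z1 - z0).
Proof.
  intros Ha H0 H1.
  apply (mvi (Qf a) (dQ a) (fun z => 0 <= Re z)).
  - intros z Hz. apply CD_to. apply Qf_CD. lra.
  - intros z Hz. apply dQ_bound; auto.
  - intros t Ht. rewrite Re_plus, Re_RtoC_mult, Re_minus. nra.
Qed.


Fixpoint iterC (T : C -> C) (n : nat) : C :=
  match n with O => RtoC 0 | S m => T (iterC T m) end.

Lemma banach (T : C -> C) (k : R) : 0 <= k < 1 ->
  (forall u v, Cmod (T u - T v) <= k * Cmod (u - v)) -> exists w, T w = w.
Proof.
  intros Hk HT.
  set (s := iterC T). set (D := Cmod (s 1%nat - s 0%nat)).
  assert (HD : 0 <= D) by apply Cmod_ge_0.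
  assert (Hstep : forall n, Cmod (s (S (S n)) - s (S n)) <= k * Cmod (s (S n) - s n)).
  { intros n. apply HT. }
  assert (Hstep2 : forall n, Cmod (s (S n) - s n) <= D * k ^ n).
  { induction n; simpl. { unfold D. lra. }
    eapply Rle_trans; [apply Hstep|]. pose proof (pow_le k n ltac:(lra)). nra. }
  assert (Hcau : forall p n, Cmod (s (n + p)%nat - s n) <= D * k ^ n * (1 - k ^ p) / (1 - k)).
  { induction p; intros n.
    - rewrite Nat.add_0_r. replace (s n - s n)%C with (RtoC 0) by ring. rewrite Cmod_0.
      simpl. replace (D * k ^ n * (1 - 1) / (1 - k)) with 0 by (field; lra). lra.
    - replace (n + S p)%nat with (S (n + p)) by lia.
      replace (s (S (n + p)) - s n)%C with ((s (S (n + p)) - s (n + p)%nat) + (s (n + p)%nat - s n))%C by ring.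
      eapply Rle_trans; [apply Cmod_triangle|].
      specialize (Hstep2 (n + p)%nat). specialize (IHp n).
      rewrite pow_add in Hstep2.
      replace (D * k ^ n * (1 - k ^ S p) / (1 - k)) with (D * (k ^ n * k ^ p) + D * k ^ n * (1 - k ^ p) / (1 - k))
        by (simpl; field; lra).
      lra. }
  assert (Hcau2 : forall n m, (n <= m)%nat -> Cmod (s m - s n) <= D * k ^ n / (1 - k)).
  { intros n m Hnm. replace m with (n + (m - n))%nat by lia.
    eapply Rle_trans; [apply Hcau|].
    pose proof (pow_le k n ltac:(lra)). pose proof (pow_le k (m - n) ltac:(lra)).
    apply Rmult_le_compat_r; [left; apply Rinv_0_lt_compat; lra|].
    assert (0 <= D * k ^ n) by nra. nra. }
  assert (Hsmall : forall eps, 0 < eps -> exists N, forall n m, (N <= n)%nat -> (N <= m)%nat -> Cmod (s m - s n) < eps).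
  { intros eps He.
    destruct (pow_lt_1_zero k ltac:(rewrite Rabs_right; lra) (eps * (1 - k) / (D + 1))) as [N HN].
    { apply Rdiv_lt_0_compat; nra. }
    exists N. intros n m Hn Hm.
    assert (Hkn : k ^ n < eps * (1 - k) / (D + 1)).
    { specialize (HN n Hn). rewrite Rabs_right in HN; [lra|]. apply Rle_ge, pow_le; lra. }
    assert (Hb : forall n m, (N <= n)%nat -> (n <= m)%nat -> Cmod (s m - s n) < eps).
    { intros n' m' Hn' Hm'. eapply Rle_lt_trans; [apply Hcau2; exact Hm'|].
      specialize (HN n' Hn'). rewrite Rabs_right in HN by (apply Rle_ge, pow_le; lra).
      pose proof (pow_le k n' ltac:(lra)).
      apply Rmult_lt_reg_r with (1 - k); [lra|].
      replace (D * k ^ n' / (1 - k) * (1 - k)) with (D * k ^ n') by (field; lra).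
      apply Rle_lt_trans with ((D + 1) * k ^ n'); [nra|].
      apply Rmult_lt_reg_r with (/ (D + 1)); [apply Rinv_0_lt_compat; lra|].
      replace ((D + 1) * k ^ n' * / (D + 1)) with (k ^ n') by (field; lra).
      replace (eps * (1 - k) * / (D + 1)) with (eps * (1 - k) / (D + 1)) by reflexivity. lra. }
    destruct (Nat.le_ge_cases n m) as [Hnm|Hnm].
    - apply Hb; auto.
    - replace (s m - s n)%C with (- (s n - s m))%C by ring. rewrite Cmod_opp. apply Hb; auto. }
  assert (Cre : Cauchy_crit (fun n => Re (s n))).
  { intros eps He. destruct (Hsmall eps He) as [N HN]. exists N. intros n m Hn Hm.
    unfold Rdist. rewrite <- Re_minus. eapply Rle_lt_trans; [apply re_le_Cmod|].
    replace (s n - s m)%C with (- (s m - s n))%C by ring. rewrite Cmod_opp. apply HN; lia. }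
  assert (Cim : Cauchy_crit (fun n => Im (s n))).
  { intros eps He. destruct (Hsmall eps He) as [N HN]. exists N. intros n m Hn Hm.
    unfold Rdist. rewrite <- Im_minus. eapply Rle_lt_trans; [apply (proj2 (Cmod_Re_Im_le _))|].
    replace (s n - s m)%C with (- (s m - s n))%C by ring. rewrite Cmod_opp. apply HN; lia. }
  destruct (Rcomplete.R_complete _ Cre) as [lr Hlr].
  destruct (Rcomplete.R_complete _ Cim) as [li Hli].
  set (l := (lr, li) : C).
  assert (Hconv : forall eps, 0 < eps -> exists N, forall n, (N <= n)%nat -> Cmod (s n - l) < eps).
  { intros eps He. destruct (Hlr (eps/2) ltac:(lra)) as [N1 H1]. destruct (Hli (eps/2) ltac:(lra)) as [N2 H2].
    exists (Nat.max N1 N2). intros n Hn.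
    eapply Rle_lt_trans; [apply Cmod_le_sum|].
    rewrite Re_minus, Im_minus. unfold l; simpl.
    specialize (H1 n ltac:(lia)). specialize (H2 n ltac:(lia)). unfold Rdist in *. lra. }
  exists l.
  destruct (Req_dec (Cmod (T l - l)) 0) as [E|E].
  { apply Cmod_eq_0 in E. replace (T l) with ((T l - l) + l)%C by ring. rewrite E. ring. }
  exfalso.
  assert (He : 0 < Cmod (T l - l)) by (pose proof (Cmod_ge_0 (T l - l)); lra).
  destruct (Hconv (Cmod (T l - l)/2) ltac:(lra)) as [N HN].
  pose proof (HN N (Nat.le_refl N)) as A1. pose proof (HN (S N) ltac:(lia)) as A2.
  assert (A3 : Cmod (T l - T (s N)) <= k * Cmod (l - s N)) by apply HT.
  replace (l - s N)%C with (- (s N - l))%C in A3 by ring. rewrite Cmod_opp in A3.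
  assert (Es : s (S N) = T (s N)) by reflexivity.
  assert (H : Cmod (T l - l) <= Cmod (T l - T (s N)) + Cmod (s (S N) - l)).
  { replace (T l - l)%C with ((T l - T (s N)) + (s (S N) - l))%C by (rewrite Es; ring). apply Cmod_triangle. }
  pose proof (Cmod_ge_0 (s N - l)).
  assert (k * Cmod (s N - l) <= k * (Cmod (T l - l) / 2)) by (apply Rmult_le_compat_l; lra).
  nra.
Qed.


Lemma dpl_ext (f g : R -> R) x l : (forall t, f t = g t) -> derivable_pt_lim f x l -> derivable_pt_lim g x l.
Proof. intros E H eps He. destruct (H eps He) as [d Hd]. exists d. intros h H1 H2. rewrite <- !E. auto. Qed.

Definition Gf (a y : R) : R := y - Im (Qf a (0, y)).
Definition Yf (a v : R) : R := epsilon (inhabits 0) (fun y => Gf a y = v).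
Definition psif (a v : R) : R := - Re (Qf a (0, Yf a v)).

Lemma Cmod_pure_im (y1 y2 : R) : Cmod ((0, y1) - (0, y2))%C = Rabs (y1 - y2).
Proof. unfold Cmod; simpl. rewrite <- sqrt_Rsqr_abs. f_equal. unfold Rsqr. ring. Qed.

Lemma Q_lip_im (a : R) (y1 y2 : R) : 0 < a < 1 ->
  Rabs (Im (Qf a (0, y1)) - Im (Qf a (0, y2))) <= 1/3 * Rabs (y1 - y2)
  /\ Rabs (Re (Qf a (0, y1)) - Re (Qf a (0, y2))) <= 1/3 * Rabs (y1 - y2).
Proof.
  intros Ha. pose proof (Q_lip a (0, y2) (0, y1) Ha (Rle_refl _) (Rle_refl _)) as H.
  rewrite Cmod_pure_im in H. destruct (Cmod_Re_Im_le (Qf a (0, y1) - Qf a (0, y2))) as [H1 H2].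
  rewrite Re_minus in H1. rewrite Im_minus in H2. split; lra.
Qed.

Lemma Gf_mono (a : R) (y1 y2 : R) : 0 < a < 1 -> y2 <= y1 -> 2/3 * (y1 - y2) <= Gf a y1 - Gf a y2.
Proof.
  intros Ha H. destruct (Q_lip_im a y1 y2 Ha) as [H1 _]. unfold Gf.
  rewrite (Rabs_right (y1 - y2)) in H1 by lra. pose proof (Rle_abs (Im (Qf a (0, y1)) - Im (Qf a (0, y2)))). lra.
Qed.

Lemma Gf_inj (a : R) (y1 y2 : R) : 0 < a < 1 -> Gf a y1 = Gf a y2 -> y1 = y2.
Proof.
  intros Ha E. destruct (Rtotal_order y1 y2) as [H|[H|H]]; auto.
  - pose proof (Gf_mono a y2 y1 Ha ltac:(lra)). lra.
  - pose proof (Gf_mono a y1 y2 Ha ltac:(lra)). lra.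
Qed.

Lemma Gf_surj (a v : R) : 0 < a < 1 -> exists y, Gf a y = v.
Proof.
  intros Ha.
  destruct (banach (fun w => (0, v + Im (Qf a (0, Im w)))) (1/3)) as [w Hw].
  { lra. }
  { intros u w.
    destruct (Q_lip_im a (Im u) (Im w) Ha) as [H1 _].
    destruct (Cmod_Re_Im_le (u - w)) as [_ H2]. rewrite Im_minus in H2.
    apply Rle_trans with (1/3 * Rabs (Im u - Im w)); [|lra].
    replace (Cminus (0, v + Im (Qf a (0, Im u))) (0, v + Im (Qf a (0, Im w))))
      with (Cminus (0, Im (Qf a (0, Im u))) (0, Im (Qf a (0, Im w))))
      by (apply injective_projections; simpl; ring).
    rewrite Cmod_pure_im. exact H1. }
  exists (Im w). unfold Gf.
  assert (E1 : Re w = 0) by (rewrite <- Hw; reflexivity).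
  assert (E2 : Im w = v + Im (Qf a (0, Im w))) by (rewrite <- Hw at 1; reflexivity).
  destruct w as [x y]. simpl in *. subst x. lra.
Qed.

Lemma Gf_Yf (a v : R) : 0 < a < 1 -> Gf a (Yf a v) = v.
Proof. intros Ha. unfold Yf. apply epsilon_spec. apply Gf_surj; exact Ha. Qed.

Lemma Yf_Gf (a y : R) : 0 < a < 1 -> Yf a (Gf a y) = y.
Proof. intros Ha. apply (Gf_inj a); auto. apply Gf_Yf; auto. Qed.

Lemma Clog_real (r : R) : 0 < r -> Clog (r, 0) = (ln r, 0).
Proof.
  intros H. unfold Clog. rewrite Carg_pos by (simpl; lra). simpl.
  replace (0 / r) with 0 by (field; lra). rewrite atan_0.
  replace (Cmod (r, 0)) with r; [reflexivity|].
  change (r, 0) with (RtoC r). rewrite Cmod_R, Rabs_right by lra. reflexivity.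
Qed.

Lemma Gf_0 (a : R) : Gf a 0 = 0.
Proof.
  unfold Gf, Qf, Lf.
  replace ((0, 0) + RtoC 3)%C with ((3, 0) : C) by (apply injective_projections; simpl; ring).
  rewrite Clog_real by lra. rewrite Clog_real by (pose proof ln3_ge1; lra).
  unfold Cexp; simpl. replace (a * 0 + 0 * ln (ln 3)) with 0 by ring. rewrite sin_0. ring.
Qed.

Lemma line_im (s : R) : (RtoC 0 + RtoC s * (0, 1))%C = (0, s).
Proof. apply injective_projections; simpl; ring. Qed.

Lemma dpl_val (f : R -> R) x l l' : derivable_pt_lim f x l -> l = l' -> derivable_pt_lim f x l'.
Proof. intros H E; subst; exact H. Qed.

Lemma Qre_deriv (a y : R) : derivable_pt_lim (fun t => Re (Qf a (0, t))) y (- Im (dQ a (0, y))).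
Proof.
  assert (H : @is_derive C_AbsRing C_NormedModule (Qf a) (RtoC 0 + RtoC y * (0, 1))%C (dQ a (0, y))).
  { rewrite line_im. apply CD_to. apply Qf_CD. simpl. lra. }
  pose proof (line_deriv (Qf a) (RtoC 0) (0, 1) (RtoC 1) (dQ a (0, y)) y H) as H2.
  eapply dpl_val; [eapply dpl_ext; [|exact H2]|].
  - intros t. simpl. rewrite line_im. destruct (Qf a (0, t)); simpl; ring.
  - destruct (dQ a (0, y)); simpl; ring.
Qed.

Lemma Qim_deriv (a y : R) : derivable_pt_lim (fun t => Im (Qf a (0, t))) y (Re (dQ a (0, y))).
Proof.
  assert (H : @is_derive C_AbsRing C_NormedModule (Qf a) (RtoC 0 + RtoC y * (0, 1))%C (dQ a (0, y))).
  { rewrite line_im. apply CD_to. apply Qf_CD. simpl. lra. }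
  pose proof (line_deriv (Qf a) (RtoC 0) (0, 1) (0, -1) (dQ a (0, y)) y H) as H2.
  eapply dpl_val; [eapply dpl_ext; [|exact H2]|].
  - intros t. simpl. rewrite line_im. destruct (Qf a (0, t)); simpl; ring.
  - destruct (dQ a (0, y)); simpl; ring.
Qed.

Lemma Gf_deriv (a y : R) : derivable_pt_lim (Gf a) y (1 - Re (dQ a (0, y))).
Proof.
  eapply dpl_ext; [| apply derivable_pt_lim_minus; [apply derivable_pt_lim_id| apply Qim_deriv]].
  intros t. reflexivity.
Qed.

Lemma dQ_im_bounds (a y : R) : 0 < a < 1 ->
  Rabs (Re (dQ a (0, y))) <= 1/3 /\ Rabs (Im (dQ a (0, y))) <= 1/3.
Proof.
  intros Ha. pose proof (dQ_bound a (0, y) Ha (Rle_refl _)).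
  destruct (Cmod_Re_Im_le (dQ a (0, y))). split; lra.
Qed.

Lemma inv_deriv (G Y : R -> R) (g v : R) :
  (forall u, G (Y u) = u) ->
  (forall y1 y2, y2 <= y1 -> 2/3 * (y1 - y2) <= G y1 - G y2) ->
  derivable_pt_lim G (Y v) g -> 2/3 <= g -> derivable_pt_lim Y v (/ g).
Proof.
  intros HGY Hmon Hd Hg eps He.
  assert (Hlip : forall y1 y2, 2/3 * Rabs (y1 - y2) <= Rabs (G y1 - G y2)).
  { intros y1 y2. destruct (Rle_dec y2 y1).
    - specialize (Hmon y1 y2 r). rewrite !Rabs_right by lra. lra.
    - specialize (Hmon y2 y1 ltac:(lra)). rewrite !Rabs_left by lra. lra. }
  destruct (Hd (eps / 3) ltac:(lra)) as [d Hdd].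
  assert (Hd2 : 0 < d * (2/3)) by (pose proof (cond_pos d); lra).
  exists (mkposreal _ Hd2). intros h Hh0 Hh. simpl in Hh.
  set (y := Y v). set (k := Y (v + h) - y).
  assert (Ek : Y (v + h) = y + k) by (unfold k; ring).
  assert (HGk : G (y + k) - G y = h) by (rewrite <- Ek; unfold y; rewrite !HGY; ring).
  assert (Hk0 : k <> 0).
  { intro E. rewrite E, Rplus_0_r in HGk. lra. }
  assert (Hkh : Rabs k <= 3/2 * Rabs h).
  { specialize (Hlip (y + k) y). replace (y + k - y) with k in Hlip by ring. rewrite HGk in Hlip. lra. }
  assert (Hkd : Rabs k < d).
  { pose proof (Rabs_pos h). lra. }
  specialize (Hdd k Hk0 Hkd). fold y in Hdd. rewrite HGk in Hdd.
  replace (k / h - / g) with ((g - h / k) * (k / h) * / g).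
  2:{ field. repeat split; try lra. }
  assert (Hh1 : 0 < Rabs h) by (apply Rabs_pos_lt; exact Hh0).
  rewrite !Rabs_mult. rewrite (Rabs_right (/ g)) by (left; apply Rinv_0_lt_compat; lra).
  assert (Hkh2 : Rabs (k / h) <= 3/2).
  { unfold Rdiv. rewrite Rabs_mult, Rabs_inv. apply (Rmult_le_reg_r (Rabs h)); [lra|].
    rewrite Rmult_assoc, Rinv_l by lra. lra. }
  assert (Hg1 : / g <= 3/2).
  { apply Rle_trans with (/ (2/3)); [apply Rinv_le_contravar; lra| lra]. }
  assert (Hg0 : 0 < / g) by (apply Rinv_0_lt_compat; lra).
  rewrite <- Rabs_Ropp in Hdd. replace (- (h / k - g)) with (g - h / k) in Hdd by ring.
  pose proof (Rabs_pos (g - h / k)). pose proof (Rabs_pos (k / h)).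
  apply Rle_lt_trans with (eps / 3 * (3/2) * (3/2)); [|lra].
  apply Rmult_le_compat; try nra.
Qed.

Lemma Yf_deriv (a v : R) : 0 < a < 1 -> derivable_pt_lim (Yf a) v (/ (1 - Re (dQ a (0, Yf a v)))).
Proof.
  intros Ha. apply inv_deriv with (G := Gf a).
  - intros u. apply Gf_Yf; exact Ha.
  - intros y1 y2 H. apply Gf_mono; auto.
  - apply Gf_deriv.
  - destruct (dQ_im_bounds a (Yf a v) Ha) as [H1 _]. pose proof (Rle_abs (Re (dQ a (0, Yf a v)))). lra.
Qed.

Lemma psif_deriv (a v : R) : 0 < a < 1 ->
  derivable_pt_lim (psif a) v (Im (dQ a (0, Yf a v)) * / (1 - Re (dQ a (0, Yf a v)))).
Proof.
  intros Ha.
  pose proof (derivable_pt_lim_comp (Yf a) (fun t => - Re (Qf a (0, t))) v _ _ (Yf_deriv a v Ha)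
     (derivable_pt_lim_opp _ _ _ (Qre_deriv a (Yf a v)))) as H.
  eapply dpl_val; [eapply dpl_ext; [|exact H]|].
  - intros t. reflexivity.
  - ring.
Qed.

Lemma psif_deriv_bound (a v : R) : 0 < a < 1 ->
  Rabs (Im (dQ a (0, Yf a v)) * / (1 - Re (dQ a (0, Yf a v)))) <= 1/2.
Proof.
  intros Ha. destruct (dQ_im_bounds a (Yf a v) Ha) as [H1 H2].
  set (r := Re (dQ a (0, Yf a v))) in *. set (i := Im (dQ a (0, Yf a v))) in *.
  pose proof (Rle_abs r). pose proof (Rle_abs (-r)). rewrite Rabs_Ropp in *.
  rewrite Rabs_mult, Rabs_inv, (Rabs_right (1 - r)) by lra.
  apply (Rmult_le_reg_r (1 - r)); [lra|]. rewrite Rmult_assoc, Rinv_l by lra. lra.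
Qed.


Definition Om (a : R) (z : C) : Prop := exists w, Cplus_half w /\ eta a w = z.

Lemma CD_ext_loc f g z l : (exists r, 0 < r /\ forall w, Cmod (w - z) < r -> f w = g w) -> CD f z l -> CD g z l.
Proof.
  intros [r [Hr E]] H eps He. destruct (H eps He) as [d [Hd Hw]].
  exists (Rmin d r). split; [apply Rmin_pos; lra|]. intros w Hw'.
  rewrite <- (E w) by (pose proof (Rmin_r d r); lra).
  rewrite <- (E z) by (replace (z - z)%C with (RtoC 0) by ring; rewrite Cmod_0; lra).
  apply Hw. pose proof (Rmin_l d r); lra.
Qed.

Lemma eta_CD (a : R) (z : C) : -2 < Re z -> CD (eta a) z (1 - dQ a z)%C.
Proof.
  intros Hz. apply CD_ext_loc with (f := fun w => (w + RtoC (-1) * Qf a w)%C).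
  - exists (Re z + 2). split; [lra|]. intros w Hw.
    rewrite eta_Qf. { apply injective_projections; simpl; ring. }
    destruct (Cmod_Re_Im_le (w - z)) as [H1 _]. rewrite Re_minus in H1.
    pose proof (Rle_abs (- (Re w - Re z))). rewrite Rabs_Ropp in *. lra.
  - eapply CD_eq. { apply CD_plus; [apply CD_id| apply CD_scal; apply Qf_CD; exact Hz]. }
    apply injective_projections; simpl; ring.
Qed.

Lemma eta_univalent (a : R) : 0 < a < 1 -> univalent_on Cplus_half (eta a).
Proof.
  intros Ha. split.
  - intros z Hz. unfold Cplus_half in Hz. exists (1 - dQ a z)%C. apply CD_to. apply eta_CD. lra.
  - intros z w Hz Hw E. unfold Cplus_half in *.
    rewrite !eta_Qf in E by lra.
    pose proof (Q_lip a w z Ha ltac:(lra) ltac:(lra)).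
    assert (E2 : (z - w)%C = (Qf a z - Qf a w)%C).
    { replace (z - w)%C with ((z - Qf a z) - (w - Qf a w) + (Qf a z - Qf a w))%C by ring.
      rewrite E. ring. }
    rewrite <- E2 in H. pose proof (Cmod_ge_0 (z - w)).
    assert (Cmod (z - w) = 0) by lra. apply Cmod_eq_0 in H1.
    replace z with ((z - w) + w)%C by ring. rewrite H1. ring.
Qed.

Definition clamp (w : C) : C := (Rmax 0 (Re w), Im w).

Lemma sq_le_abs (x y : R) : Rabs x <= Rabs y -> x ^ 2 <= y ^ 2.
Proof. intros H. unfold Rabs in H. destruct (Rcase_abs x), (Rcase_abs y); nra. Qed.

Lemma Cmod_le_comp (u w : C) : Rabs (Re u) <= Rabs (Re w) -> Rabs (Im u) <= Rabs (Im w) -> Cmod u <= Cmod w.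
Proof.
  intros H1 H2. unfold Cmod. apply sqrt_le_1_alt.
  pose proof (sq_le_abs _ _ H1). pose proof (sq_le_abs _ _ H2). unfold Re, Im in *. lra.
Qed.

Lemma clamp_lip (u w : C) : Cmod (clamp u - clamp w) <= Cmod (u - w).
Proof.
  apply Cmod_le_comp.
  - rewrite !Re_minus. unfold clamp. simpl.
    unfold Rmax. destruct (Rle_dec 0 (Re u)), (Rle_dec 0 (Re w)); unfold Rabs;
    repeat destruct Rcase_abs; lra.
  - rewrite !Im_minus. unfold clamp. simpl. lra.
Qed.

Definition Tz (a : R) (z w : C) : C := (z + Qf a (clamp w))%C.

Lemma clamp_re (w : C) : 0 <= Re (clamp w).
Proof. unfold clamp; simpl. apply Rmax_l. Qed.

Lemma Tz_contr (a : R) (z u w : C) : 0 < a < 1 -> Cmod (Tz a z u - Tz a z w) <= 1/3 * Cmod (u - w).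
Proof.
  intros Ha. unfold Tz. replace (z + Qf a (clamp u) - (z + Qf a (clamp w)))%C with (Qf a (clamp u) - Qf a (clamp w))%C by ring.
  eapply Rle_trans; [apply Q_lip; auto; apply clamp_re|].
  pose proof (clamp_lip u w). lra.
Qed.

Lemma Tz_uniq (a : R) (z u w : C) : 0 < a < 1 -> Tz a z u = u -> Tz a z w = w -> u = w.
Proof.
  intros Ha Hu Hw. pose proof (Tz_contr a z u w Ha). rewrite Hu, Hw in H.
  pose proof (Cmod_ge_0 (u - w)). assert (Cmod (u - w) = 0) by lra. apply Cmod_eq_0 in H1.
  replace u with ((u - w) + w)%C by ring. rewrite H1. ring.
Qed.

Lemma Om_char (a : R) (z : C) : 0 < a < 1 -> (Om a z <-> psif a (Im z) < Re z).
Proof.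
  intros Ha. split.
  - intros [w [Hw E]]. unfold Cplus_half in Hw.
    destruct (Rlt_dec (psif a (Im z)) (Re z)) as [H|H]; [exact H|exfalso].
    set (y0 := Yf a (Im z)). set (t := psif a (Im z) - Re z).
    assert (Ht : 0 <= t) by (unfold t; lra).
    set (w2 := ((- t)%R, y0) : C).
    assert (F1 : Tz a z w = w).
    { unfold Tz. replace (clamp w) with w.
      2:{ unfold clamp. rewrite Rmax_right by lra. destruct w; reflexivity. }
      rewrite <- E. rewrite eta_Qf by lra. ring. }
    assert (F2 : Tz a z w2 = w2).
    { unfold Tz. replace (clamp w2) with ((0, y0) : C).
      2:{ unfold clamp, w2; simpl. rewrite Rmax_left by lra. reflexivity. }
      pose proof (Gf_Yf a (Im z) Ha) as G. fold y0 in G. unfold Gf in G.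
      apply injective_projections.
      - change (Re (z + Qf a (0, y0))%C = - t). rewrite Re_plus. unfold t, psif. fold y0. lra.
      - change (Im (z + Qf a (0, y0))%C = y0). rewrite Im_plus. lra. }
    pose proof (Tz_uniq a z w w2 Ha F1 F2). rewrite H0 in Hw. unfold w2 in Hw; simpl in Hw. lra.
  - intros H.
    destruct (banach (Tz a z) (1/3) ltac:(lra) (fun u w => Tz_contr a z u w Ha)) as [w Hw].
    destruct (Rlt_dec 0 (Re w)) as [Hr|Hr].
    + exists w. split; [exact Hr|].
      assert (Ec : clamp w = w) by (unfold clamp; rewrite Rmax_right by lra; destruct w; reflexivity).
      unfold Tz in Hw. rewrite Ec in Hw.
      rewrite eta_Qf by lra. rewrite <- Hw at 1. ring.
    + exfalso.
      set (y0 := Im w).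
      assert (Ec : clamp w = (0, y0)) by (unfold clamp, y0; rewrite Rmax_left by lra; reflexivity).
      unfold Tz in Hw. rewrite Ec in Hw.
      assert (E1 : Re w = Re z + Re (Qf a (0, y0))) by (rewrite <- Hw at 1; reflexivity).
      assert (E2 : y0 = Im z + Im (Qf a (0, y0))) by (unfold y0 at 1; rewrite <- Hw at 1; reflexivity).
      assert (EG : Gf a y0 = Im z) by (unfold Gf; lra).
      assert (EY : Yf a (Im z) = y0) by (rewrite <- EG; apply Yf_Gf; exact Ha).
      unfold psif in H. rewrite EY in H. lra.
Qed.


Lemma Rpower_pos (x e : R) : 0 < Rpower x e.
Proof. unfold Rpower. apply exp_pos. Qed.

Lemma exp_le_mono (x y : R) : x <= y -> exp x <= exp y.
Proof. intros H. destruct (Req_dec x y); [subst; lra|]. left. apply exp_increasing. lra. Qed.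

Lemma Rpower_neg_anti (x y e : R) : e < 0 -> 0 < x <= y -> Rpower y e <= Rpower x e.
Proof.
  intros He Hxy. unfold Rpower. apply exp_le_mono.
  destruct (Req_dec x y); [subst; lra|].
  assert (ln x < ln y) by (apply ln_increasing; lra). nra.
Qed.

Lemma pow_small (a c : R) : a < 1 -> 0 < c -> exists X0, 0 < X0 /\ forall X, X0 <= X -> Rpower X a <= c * X.
Proof.
  intros Ha Hc. exists (Rpower c (/ (a - 1))). split; [apply Rpower_pos|].
  intros X HX. assert (HX0 : 0 < X) by (pose proof (Rpower_pos c (/ (a - 1))); lra).
  replace a with ((a - 1) + 1) at 1 by ring. rewrite Rpower_plus, Rpower_1 by exact HX0.
  apply Rmult_le_compat_r; [lra|].
  eapply Rle_trans; [apply Rpower_neg_anti with (x := Rpower c (/ (a - 1))); [lra| split; [apply Rpower_pos|exact HX]]|].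
  rewrite Rpower_mult. replace (/ (a - 1) * (a - 1)) with 1 by (field; lra). rewrite Rpower_1 by lra. lra.
Qed.

Lemma Yf_bound (a v : R) : 0 < a < 1 -> Rabs (Yf a v) <= 2 * Rabs v.
Proof.
  intros Ha. pose proof (Gf_Yf a v Ha) as E. pose proof (Gf_0 a) as E0.
  set (y := Yf a v) in *.
  destruct (Rle_dec 0 y).
  - pose proof (Gf_mono a y 0 Ha r). rewrite E, E0 in H.
    rewrite Rabs_right by lra. rewrite Rabs_right by lra. lra.
  - pose proof (Gf_mono a 0 y Ha ltac:(lra)). rewrite E, E0 in H.
    rewrite Rabs_left by lra. rewrite Rabs_left1 by lra. lra.
Qed.


Lemma Lf_mod_bound (y : R) : Cmod (Lf (0, y)) <= ln (3 + Rabs y) + 2.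
Proof.
  eapply Rle_trans; [apply Cmod_le_sum|].
  unfold Lf, Clog. simpl Re; simpl Im.
  assert (E3 : ((0, y) + RtoC 3)%C = ((3, y) : C)) by (apply injective_projections; simpl; ring).
  rewrite E3. rewrite Carg_pos by (simpl; lra). simpl.
  assert (Hm : 3 <= Cmod ((3, y) : C)) by (eapply Rle_trans; [|apply Cmod_ge_Re]; simpl; lra).
  assert (Hm2 : Cmod ((3, y) : C) <= 3 + Rabs y).
  { eapply Rle_trans; [apply Cmod_le_sum|]. simpl. rewrite Rabs_right by lra. lra. }
  assert (0 <= ln (Cmod ((3, y) : C))) by (rewrite <- ln_1; apply ln_le; lra).
  rewrite Rabs_right by lra.
  assert (ln (Cmod ((3, y) : C)) <= ln (3 + Rabs y)) by (apply ln_le; lra).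
  pose proof (atan_bound (y / 3)). pose proof PI_4.
  assert (Rabs (atan (y / 3)) <= 2) by (apply Rabs_le; lra).
  lra.
Qed.

Lemma psi_upper (a v : R) : 0 < a < 1 -> - psif a v <= Rpower (ln (3 + 2 * Rabs v) + 2) a.
Proof.
  intros Ha. unfold psif. rewrite Ropp_involutive.
  set (y := Yf a v).
  eapply Rle_trans; [apply Rle_abs|]. eapply Rle_trans; [apply re_le_Cmod|].
  rewrite Qf_mod by (simpl; lra).
  apply Rle_Rpower_l; [lra|]. split.
  - apply Cmod_L_pos. simpl; lra.
  - eapply Rle_trans; [apply Lf_mod_bound|].
    pose proof (Yf_bound a v Ha). fold y in H. apply Rplus_le_compat_r. apply ln_le.
    + pose proof (Rabs_pos y); lra.
    + lra.
Qed.

Lemma ln3_le2 : ln 3 <= 2.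
Proof. rewrite <- (ln_exp 2). apply ln_le; [lra|]. pose proof (exp_ineq1 2 ltac:(lra)). lra. Qed.

Lemma psi_log (a : R) : 0 < a < 1 -> exists Rr b, 0 < Rr /\ 0 < b < 1 /\
  forall y, Rr <= Rabs y -> - b * ln (Rabs y) <= psif a y.
Proof.
  intros Ha. destruct (pow_small a (1/4) ltac:(lra) ltac:(lra)) as [X0 [HX0 Hp]].
  set (M := Rmax 4 X0). exists (exp M), (1/2). split; [apply exp_pos|]. split; [lra|].
  intros v Hv.
  assert (HM4 : 4 <= M) by apply Rmax_l. assert (HMX : X0 <= M) by apply Rmax_r.
  assert (Hv3 : 3 <= Rabs v).
  { pose proof (exp_ineq1 M ltac:(lra)). lra. }
  set (X := ln (Rabs v)).
  assert (HX : M <= X) by (unfold X; rewrite <- (ln_exp M); apply ln_le; [apply exp_pos| exact Hv]).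
  assert (HB : ln (3 + 2 * Rabs v) + 2 <= 2 * X).
  { assert (ln (3 + 2 * Rabs v) <= ln 3 + X).
    { unfold X. rewrite <- ln_mult by lra. apply ln_le; lra. }
    pose proof ln3_le2. lra. }
  assert (HB0 : 0 < ln (3 + 2 * Rabs v) + 2).
  { assert (0 <= ln (3 + 2 * Rabs v)) by (rewrite <- ln_1; apply ln_le; pose proof (Rabs_pos v); lra). lra. }
  pose proof (psi_upper a v Ha).
  assert (Rpower (ln (3 + 2 * Rabs v) + 2) a <= Rpower (2 * X) a) by (apply Rle_Rpower_l; lra).
  assert (Rpower (2 * X) a <= 1/4 * (2 * X)) by (apply Hp; lra).
  fold X. lra.
Qed.

Lemma log_starlike (a : R) : 0 < a < 1 -> log_starlike_at_infinity (Om a).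
Proof.
  intros Ha. exists (psif a). split; [|split; [|split]].
  - intros y. exists (Im (dQ a (0, Yf a y)) * / (1 - Re (dQ a (0, Yf a y)))).
    apply is_derive_Reals. apply psif_deriv; exact Ha.
  - exists 1. split; [lra|]. intros y.
    rewrite (is_derive_unique _ _ _ (proj2 (is_derive_Reals _ _ _) (psif_deriv a y Ha))).
    pose proof (psif_deriv_bound a y Ha). lra.
  - apply psi_log; exact Ha.
  - intros z. apply Om_char; exact Ha.
Qed.


Lemma ln_le_sub1 (t : R) : 0 < t -> ln t <= t - 1.
Proof.
  intros H. destruct (Req_dec (ln t) 0) as [E|E].
  - rewrite E. assert (t = 1) by (rewrite <- (exp_ln t) by lra; rewrite E; apply exp_0). lra.
  - pose proof (exp_ineq1 (ln t) E). rewrite exp_ln in H0 by lra. lra.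
Qed.

Lemma ln_le_lin (t : R) : 0 < t -> ln t <= t / 4 + 1.
Proof.
  intros H. replace t with ((t / 4) * 4) at 1 by field. rewrite ln_mult by lra.
  pose proof (ln_le_sub1 (t / 4) ltac:(lra)).
  assert (ln 4 <= 2).
  { rewrite <- (ln_exp 2). apply ln_le; [lra|].
    replace 2 with (1 + 1) by ring. rewrite exp_plus. pose proof (exp_ineq1 1 ltac:(lra)). nra. }
  lra.
Qed.

Lemma Cexp_real (s : R) : Cexp (s, 0) = (exp s, 0).
Proof. unfold Cexp; simpl. rewrite cos_0, sin_0. apply injective_projections; simpl; ring. Qed.

Lemma Qf_real (a x : R) : 0 <= x -> Qf a (x, 0) = (Rpower (ln (x + 3)) a, 0).
Proof.
  intros Hx. unfold Qf, Lf.
  replace ((x, 0) + RtoC 3)%C with ((x + 3, 0) : C) by (apply injective_projections; simpl; ring).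
  rewrite Clog_real by lra.
  assert (1 <= ln (x + 3)) by (eapply Rle_trans; [apply ln3_ge1| apply ln_le; lra]).
  rewrite Clog_real by lra.
  replace (RtoC a * (ln (ln (x + 3)), 0))%C with ((a * ln (ln (x + 3)), 0) : C) by (apply injective_projections; simpl; ring).
  rewrite Cexp_real. reflexivity.
Qed.

Lemma Om_real (a x : R) : 0 < x -> Om a ((x - Rpower (ln (x + 3)) a, 0) : C).
Proof.
  intros Hx. exists (x, 0). split; [unfold Cplus_half; simpl; lra|].
  rewrite eta_Qf by (simpl; lra). rewrite Qf_real by lra.
  apply injective_projections; simpl; ring.
Qed.

Lemma Om_axis (a y : R) : 0 < a < 1 -> Om a ((- Re (Qf a (0, y)) + 1, Gf a y) : C).
Proof.
  intros Ha. apply Om_char; [exact Ha|]. change (psif a (Gf a y) < - Re (Qf a (0, y)) + 1). unfold psif. rewrite Yf_Gf by exact Ha. lra.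
Qed.

Lemma ReQ_lower (a y : R) : 0 < a < 1 -> 1 < Rabs y ->
  cos (a * (PI / 2)) * Rpower (ln (Rabs y)) a <= Re (Qf a (0, y)).
Proof.
  intros Ha Hy.
  set (L := Lf (0, y)).
  assert (HReL : 0 < Re L) by (apply Re_L; simpl; lra).
  assert (HL : Qf a (0, y) = Cexp (RtoC a * Clog L)) by reflexivity.
  rewrite HL. unfold Cexp. simpl Re. 
  unfold Clog. simpl.
  replace (a * ln (Cmod L) - 0 * Carg L) with (a * ln (Cmod L)) by ring.
  replace (a * Carg L + 0 * ln (Cmod L)) with (a * Carg L) by ring.
  rewrite Carg_pos by exact HReL.
  set (th := atan (Im L / Re L)).
  pose proof (atan_bound (Im L / Re L)) as Hb. fold th in Hb.
  assert (Hcos : cos (a * (PI / 2)) <= cos (a * th)).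
  { pose proof PI_RGT_0.
    destruct (Rle_dec 0 th).
    - destruct (Req_dec (a * th) (a * (PI / 2))) as [E|E]; [rewrite E; lra|].
      left. apply cos_decreasing_1; nra.
    - rewrite <- (cos_neg (a * th)).
      destruct (Req_dec (- (a * th)) (a * (PI / 2))) as [E|E]; [rewrite E; lra|].
      left. apply cos_decreasing_1; nra. }
  assert (Hc0 : 0 < cos (a * (PI / 2))) by (apply cos_gt_0; pose proof PI_RGT_0; nra).
  assert (HmL : ln (Rabs y) <= Cmod L).
  { eapply Rle_trans; [|apply Cmod_ge_Re]. unfold L, Lf.
    replace ((0, y) + RtoC 3)%C with ((3, y) : C) by (apply injective_projections; simpl; ring).
    unfold Clog; simpl Re.
    pose proof (Cmod_Re_Im_le ((3, y) : C)) as [_ H2]. simpl in H2.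
    apply ln_le; lra. }
  assert (Hl0 : 0 < ln (Rabs y)) by (rewrite <- ln_1; apply ln_increasing; lra).
  assert (HP : Rpower (ln (Rabs y)) a <= exp (a * ln (Cmod L))).
  { unfold Rpower. apply exp_le_mono. apply Rmult_le_compat_l; [lra|].
    apply ln_le; lra. }
  assert (0 < Rpower (ln (Rabs y)) a) by apply Rpower_pos.
  rewrite (Rmult_comm (exp (a * ln (Cmod L)))). apply Rmult_le_compat; lra.
Qed.

Lemma ReQ_large (a B : R) : 0 < a < 1 -> exists Y0, 0 < Y0 /\ B <= Re (Qf a (0, Y0)) /\ B <= Re (Qf a (0, - Y0)).
Proof.
  intros Ha.
  set (k := cos (a * (PI / 2))).
  assert (Hk : 0 < k) by (apply cos_gt_0; pose proof PI_RGT_0; nra).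
  set (X := Rpower (Rmax (B / k) 1) (/ a)).
  assert (HX0 : 0 < X) by apply Rpower_pos.
  assert (HXa : Rpower X a = Rmax (B / k) 1).
  { unfold X. rewrite Rpower_mult. replace (/ a * a) with 1 by (field; lra).
    apply Rpower_1. pose proof (Rmax_r (B / k) 1). lra. }
  assert (HX1 : 1 <= X).
  { destruct (Rle_dec 1 X) as [h|h]; [exact h|exfalso].
    assert (Rpower X a < 1).
    { unfold Rpower. rewrite <- exp_0. apply exp_increasing.
      assert (ln X < 0) by (rewrite <- ln_1; apply ln_increasing; lra). nra. }
    pose proof (Rmax_r (B / k) 1). lra. }
  exists (exp X). split; [apply exp_pos|].
  assert (H1 : 1 < Rabs (exp X)) by (rewrite Rabs_right by (left; apply exp_pos); pose proof (exp_ineq1 X ltac:(lra)); lra).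
  assert (H2 : 1 < Rabs (- exp X)) by (rewrite Rabs_Ropp; exact H1).
  assert (Hb : B <= k * Rpower X a).
  { rewrite HXa. pose proof (Rmax_l (B / k) 1).
    apply Rle_trans with (k * (B / k)); [right; field; lra| apply Rmult_le_compat_l; lra]. }
  split.
  - eapply Rle_trans; [|apply ReQ_lower; auto]. fold k. rewrite Rabs_right by (left; apply exp_pos).
    rewrite ln_exp. exact Hb.
  - eapply Rle_trans; [|apply ReQ_lower; auto]. fold k. rewrite Rabs_Ropp, Rabs_right by (left; apply exp_pos).
    rewrite ln_exp. exact Hb.
Qed.

Lemma Gf_sign (a y : R) : 0 < a < 1 -> (0 <= y -> 2/3 * y <= Gf a y) /\ (y <= 0 -> Gf a y <= 2/3 * y).
Proof.
  intros Ha. pose proof (Gf_0 a). split; intros H0.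
  - pose proof (Gf_mono a y 0 Ha H0). lra.
  - pose proof (Gf_mono a 0 y Ha H0). lra.
Qed.

Lemma not_half_plane (a : R) : 0 < a < 1 -> ~ in_some_half_plane (Om a).
Proof.
  intros Ha [c [t [Hc H]]]. destruct c as [p q].
  assert (Hre : forall z : C, Re (Cmult (p, q) z) = p * Re z - q * Im z) by (intros [x y]; simpl; ring).
  destruct (Rtotal_order p 0) as [Hp|[Hp|Hp]].
  -
    set (x := 7 + 4 * (Rabs t + 1) / (- p)).
    assert (Hx : 0 < x) by (unfold x; pose proof (Rabs_pos t); assert (0 < 4 * (Rabs t + 1) / - p) by (apply Rdiv_lt_0_compat; lra); lra).
    specialize (H _ (Om_real a x Hx)). rewrite Hre in H. simpl in H.
    assert (1 <= ln (x + 3)) by (eapply Rle_trans; [apply ln3_ge1| apply ln_le; lra]).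
    pose proof (Rpower_le_self (ln (x + 3)) a H0 ltac:(lra)).
    pose proof (ln_le_lin (x + 3) ltac:(lra)).
    assert (Hz : x - Rpower (ln (x + 3)) a >= 3 * x / 4 - 7/4) by lra.
    assert (p * (x - Rpower (ln (x + 3)) a) <= p * (3 * x / 4 - 7/4)) by (apply Rmult_le_compat_neg_l; lra).
    assert (p * (3 * x / 4 - 7 / 4) = p * 7/2 - 3 * (Rabs t + 1)) by (unfold x; field; lra).
    pose proof (Rle_abs (- t)). rewrite Rabs_Ropp in *. nra.
  -
    subst p. assert (Hq : q <> 0) by (intro E; subst; apply Hc; reflexivity).
    set (Y := 3 * (Rabs t + 1) / (2 * Rabs q)).
    assert (HY : 0 < Y) by (unfold Y; apply Rdiv_lt_0_compat; [pose proof (Rabs_pos t); lra| pose proof (Rabs_pos_lt q Hq); lra]).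
    destruct (Rle_dec 0 q).
    + specialize (H _ (Om_axis a Y Ha)). rewrite Hre in H. simpl in H.
      destruct (Gf_sign a Y Ha) as [G1 _]. specialize (G1 ltac:(lra)).
      assert (q * Gf a Y >= q * (2/3 * Y)) by (apply Rle_ge, Rmult_le_compat_l; lra).
      assert (q * (2/3 * Y) = Rabs t + 1) by (unfold Y; rewrite (Rabs_right q) by lra; field; exact Hq).
      pose proof (Rle_abs (- t)). rewrite Rabs_Ropp in *. lra.
    + specialize (H _ (Om_axis a (- Y) Ha)). rewrite Hre in H. simpl in H.
      destruct (Gf_sign a (- Y) Ha) as [_ G1]. specialize (G1 ltac:(lra)).
      assert (q * Gf a (- Y) >= q * (2/3 * - Y)) by (apply Rle_ge, Rmult_le_compat_neg_l; lra).
      assert (q * (2/3 * - Y) = Rabs t + 1) by (unfold Y; rewrite (Rabs_left q) by lra; field; exact Hq).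
      pose proof (Rle_abs (- t)). rewrite Rabs_Ropp in *. lra.
  -
    destruct (ReQ_large a (1 + (Rabs t + 1) / p) Ha) as [Y0 [HY0 [H1 H2]]].
    assert (Hpp : p * (1 - (1 + (Rabs t + 1) / p)) = - (Rabs t + 1)) by (field; lra).
    destruct (Rle_dec 0 q).
    + specialize (H _ (Om_axis a Y0 Ha)). rewrite Hre in H.
      change (t <= p * (- Re (Qf a (0, Y0)) + 1) - q * Gf a Y0) in H.
      destruct (Gf_sign a Y0 Ha) as [G1 _]. specialize (G1 ltac:(lra)).
      assert (q * Gf a Y0 >= 0) by (apply Rle_ge, Rmult_le_pos; lra).
      assert (p * (- Re (Qf a (0, Y0)) + 1) <= p * (1 - (1 + (Rabs t + 1) / p))) by (apply Rmult_le_compat_l; lra).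
      pose proof (Rle_abs (- t)). rewrite Rabs_Ropp in *. lra.
    + specialize (H _ (Om_axis a (- Y0) Ha)). rewrite Hre in H.
      change (t <= p * (- Re (Qf a (0, - Y0)) + 1) - q * Gf a (- Y0)) in H.
      destruct (Gf_sign a (- Y0) Ha) as [_ G1]. specialize (G1 ltac:(lra)).
      assert (q * Gf a (- Y0) >= 0) by (apply Rle_ge; nra).
      assert (p * (- Re (Qf a (0, - Y0)) + 1) <= p * (1 - (1 + (Rabs t + 1) / p))) by (apply Rmult_le_compat_l; lra).
      pose proof (Rle_abs (- t)). rewrite Rabs_Ropp in *. lra.
Qed.


Definition rr (M x y : R) : R := sqrt ((x + M) * (x + M) + y * y).
Definition ff (M x y : R) : R := sqrt ((rr M x y + (x + M)) * / 2).
Definition good (M x y : R) : Prop := y <> 0 \/ 0 < x + M.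

Lemma good_r (M x y : R) : good M x y -> 0 < (x + M) * (x + M) + y * y.
Proof. intros [H|H]; [assert (0 < y ^ 2) by (apply pow2_gt_0; exact H) | assert (0 < (x + M) ^ 2) by (apply pow2_gt_0; lra)];
  pose proof (pow2_ge_0 y); pose proof (pow2_ge_0 (x + M)); simpl in *; lra. Qed.

Lemma rr_pos M x y : good M x y -> 0 < rr M x y.
Proof. intros H. unfold rr. apply sqrt_lt_R0. apply good_r; exact H. Qed.

Lemma rr_ge M x y : Rabs y <= rr M x y /\ Rabs (x + M) <= rr M x y.
Proof.
  unfold rr. split; rewrite <- sqrt_Rsqr_abs; apply sqrt_le_1_alt; unfold Rsqr;
  pose proof (pow2_ge_0 y); pose proof (pow2_ge_0 (x + M)); simpl; nra.
Qed.

Lemma S_pos M x y : good M x y -> 0 < (rr M x y + (x + M)) * / 2.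
Proof.
  intros H. destruct (rr_ge M x y) as [H1 H2]. pose proof (rr_pos M x y H).
  destruct H as [H|H].
  - assert (0 < Rabs y) by (apply Rabs_pos_lt; exact H).
    destruct (Rle_dec 0 (x + M)); [lra|].
    assert (rr M x y * rr M x y = (x + M)^2 + y^2) by (unfold rr; rewrite sqrt_sqrt; [ring| nra]).
    assert (0 < y ^ 2) by (apply pow2_gt_0; exact H).
    assert (rr M x y > - (x + M)) by nra. lra.
  - lra.
Qed.

Lemma ff_pos M x y : good M x y -> 0 < ff M x y.
Proof. intros H. unfold ff. apply sqrt_lt_R0. apply S_pos; exact H. Qed.

Definition F (M K x y : R) : R := K * ff M x y.
Definition Fx (M K x y : R) : R := K * (((x + M) / rr M x y + 1) / (4 * ff M x y)).

Lemma D1 M K x y : good M x y -> is_derive (fun t => F M K t y) x (Fx M K x y).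
Proof.
  intros H. pose proof (good_r M x y H). pose proof (S_pos M x y H).
  pose proof (rr_pos M x y H). pose proof (ff_pos M x y H).
  unfold F, Fx, ff, rr in *. auto_derive.
  - split; [exact H0| split; [exact H1| auto]].
  - field. repeat split; apply Rgt_not_eq; assumption.
Qed.

Definition Fy (M K x y : R) : R := K * ((y / rr M x y) / (4 * ff M x y)).
Definition fxd (M x y : R) : R := ((x + M) / rr M x y + 1) / (4 * ff M x y).
Definition fyd (M x y : R) : R := (y / rr M x y) / (4 * ff M x y).
Definition Fxx (M K x y : R) : R :=
  K * ((((rr M x y - (x + M) * ((x + M) / rr M x y)) / (rr M x y * rr M x y)) * (4 * ff M x y)
        - ((x + M) / rr M x y + 1) * (4 * fxd M x y)) / ((4 * ff M x y) * (4 * ff M x y))).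
Definition Fxy (M K x y : R) : R :=
  K * (((- ((x + M) * (y / rr M x y)) / (rr M x y * rr M x y)) * (4 * ff M x y)
        - ((x + M) / rr M x y + 1) * (4 * fyd M x y)) / ((4 * ff M x y) * (4 * ff M x y))).
Definition Fyx (M K x y : R) : R :=
  K * (((- (y * ((x + M) / rr M x y)) / (rr M x y * rr M x y)) * (4 * ff M x y)
        - (y / rr M x y) * (4 * fxd M x y)) / ((4 * ff M x y) * (4 * ff M x y))).
Definition Fyy (M K x y : R) : R :=
  K * ((((rr M x y - y * (y / rr M x y)) / (rr M x y * rr M x y)) * (4 * ff M x y)
        - (y / rr M x y) * (4 * fyd M x y)) / ((4 * ff M x y) * (4 * ff M x y))).

Ltac dtac M x y H :=
  let H0 := fresh in let H1 := fresh in let H2 := fresh in let H3 := fresh in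
  pose proof (good_r M x y H) as H0; pose proof (S_pos M x y H) as H1;
  pose proof (rr_pos M x y H) as H2; pose proof (ff_pos M x y H) as H3;
  unfold F, Fx, Fy, Fxx, Fxy, Fyx, Fyy, fxd, fyd, ff, rr in *; auto_derive;
  [ repeat split; try assumption; try (apply Rgt_not_eq; nra)
  | field; repeat split; apply Rgt_not_eq; nra ].

Lemma D2 M K x y : good M x y -> is_derive (fun t => F M K x t) y (Fy M K x y).
Proof. intros H. dtac M x y H. Qed.
Lemma D3 M K x y : good M x y -> is_derive (fun t => Fx M K t y) x (Fxx M K x y).
Proof. intros H. dtac M x y H. Qed.
Lemma D4 M K x y : good M x y -> is_derive (fun t => Fx M K x t) y (Fxy M K x y).
Proof. intros H. dtac M x y H. Qed.
Lemma D5 M K x y : good M x y -> is_derive (fun t => Fy M K t y) x (Fyx M K x y).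
Proof. intros H. dtac M x y H. Qed.
Lemma D6 M K x y : good M x y -> is_derive (fun t => Fy M K x t) y (Fyy M K x y).
Proof. intros H. dtac M x y H. Qed.

Lemma rr_sq M x y : rr M x y * rr M x y = (x + M) * (x + M) + y * y.
Proof. unfold rr. apply sqrt_sqrt. pose proof (Rle_0_sqr (x + M)); pose proof (Rle_0_sqr y); unfold Rsqr in *; lra. Qed.

Lemma ff_sq M x y : good M x y -> ff M x y * ff M x y = (rr M x y + (x + M)) * / 2.
Proof. intros H. unfold ff. apply sqrt_sqrt. pose proof (S_pos M x y H). lra. Qed.

Lemma lap M K x y : good M x y -> Fxx M K x y + Fyy M K x y = 0.
Proof.
  intros H. pose proof (rr_pos M x y H) as Hr. pose proof (ff_pos M x y H) as Hf.
  pose proof (rr_sq M x y) as Er. pose proof (ff_sq M x y H) as Ef.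
  set (r := rr M x y) in *. set (f := ff M x y) in *. set (X := x + M) in *.
  assert (E : Fxx M K x y + Fyy M K x y =
    K * ((2 * (r * r) - (X * X + y * y)) * (4 * (f * f)) - r * ((X * X + y * y) + 2 * X * r + r * r))
      / (16 * (f * f * f) * (r * r * r))).
  { unfold Fxx, Fyy, fxd, fyd. fold r f X. field. split; apply Rgt_not_eq; lra. }
  rewrite E. rewrite <- Er. rewrite Ef.
  unfold Rdiv. replace ((2 * (r * r) - r * r) * (4 * ((r + X) * / 2)) - r * (r * r + 2 * X * r + r * r)) with 0 by field.
  ring.
Qed.


Definition uF (M K : R) (z : C) : R := F M K (Re z) (Im z).

Lemma locR (x r : R) (P : R -> Prop) : 0 < r -> (forall t, Rabs (t - x) < r -> P t) -> locally x P.
Proof. intros Hr H. exists (mkposreal _ Hr). intros t Ht. apply H. exact Ht. Qed.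

Lemma good_loc_x M x y : good M x y -> locally x (fun t => good M t y).
Proof.
  intros [H|H].
  - apply (locR x 1); [lra|]. intros t _. left; exact H.
  - apply (locR x (x + M)); [lra|]. intros t Ht. right.
    pose proof (Rle_abs (- (t - x))). rewrite Rabs_Ropp in *. lra.
Qed.

Lemma good_loc_y M x y : good M x y -> locally y (fun t => good M x t).
Proof.
  intros H. destruct (Rlt_dec 0 (x + M)) as [Hx|Hx].
  - apply (locR y 1); [lra|]. intros t _. right; exact Hx.
  - destruct H as [H|H]; [|lra].
    apply (locR y (Rabs y)); [apply Rabs_pos_lt; exact H|]. intros t Ht. left. intros E. subst t.
    rewrite Rminus_0_l, Rabs_Ropp in Ht. lra.
Qed.

Lemma dxu M K x y : good M x y -> dx (uF M K) (x, y) = Fx M K x y.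
Proof. intros H. unfold dx. simpl. apply is_derive_unique. apply D1. exact H. Qed.
Lemma dyu M K x y : good M x y -> dy (uF M K) (x, y) = Fy M K x y.
Proof. intros H. unfold dy. simpl. apply is_derive_unique. apply D2. exact H. Qed.

Lemma loc_mono (x : R) (P Q : R -> Prop) : locally x P -> (forall t, P t -> Q t) -> locally x Q.
Proof. intros [e He] H. exists e. intros t Ht. apply H, He, Ht. Qed.

Lemma dxdxu M K x y : good M x y -> dx (dx (uF M K)) (x, y) = Fxx M K x y.
Proof.
  intros H. unfold dx at 1. simpl.
  rewrite (Derive_ext_loc _ (fun t => Fx M K t y)).
  - apply is_derive_unique. apply D3. exact H.
  - apply (loc_mono _ _ _ (good_loc_x M x y H)). intros t Ht. apply dxu. exact Ht.
Qed.
Lemma dydxu M K x y : good M x y -> dy (dx (uF M K)) (x, y) = Fxy M K x y.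
Proof.
  intros H. unfold dy at 1. simpl.
  rewrite (Derive_ext_loc _ (fun t => Fx M K x t)).
  - apply is_derive_unique. apply D4. exact H.
  - apply (loc_mono _ _ _ (good_loc_y M x y H)). intros t Ht. apply dxu. exact Ht.
Qed.
Lemma dxdyu M K x y : good M x y -> dx (dy (uF M K)) (x, y) = Fyx M K x y.
Proof.
  intros H. unfold dx at 1. simpl.
  rewrite (Derive_ext_loc _ (fun t => Fy M K t y)).
  - apply is_derive_unique. apply D5. exact H.
  - apply (loc_mono _ _ _ (good_loc_x M x y H)). intros t Ht. apply dyu. exact Ht.
Qed.
Lemma dydyu M K x y : good M x y -> dy (dy (uF M K)) (x, y) = Fyy M K x y.
Proof.
  intros H. unfold dy at 1. simpl.
  rewrite (Derive_ext_loc _ (fun t => Fy M K x t)).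
  - apply is_derive_unique. apply D6. exact H.
  - apply (loc_mono _ _ _ (good_loc_y M x y H)). intros t Ht. apply dyu. exact Ht.
Qed.

Lemma c_rr M x y : continuity_2d_pt (rr M) x y.
Proof.
  unfold rr. apply continuity_1d_2d_pt_comp.
  - apply continuity_pt_sqrt. pose proof (Rle_0_sqr (x + M)); pose proof (Rle_0_sqr y); unfold Rsqr in *; lra.
  - apply continuity_2d_pt_plus; apply continuity_2d_pt_mult;
    try apply continuity_2d_pt_plus; try apply continuity_2d_pt_id1; try apply continuity_2d_pt_id2;
    apply continuity_2d_pt_const.
Qed.

Lemma c_ff M x y : good M x y -> continuity_2d_pt (ff M) x y.
Proof.
  intros H. unfold ff. apply continuity_1d_2d_pt_comp.
  - apply continuity_pt_sqrt. pose proof (S_pos M x y H). lra.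
  - apply continuity_2d_pt_mult; [|apply continuity_2d_pt_const].
    apply continuity_2d_pt_plus; [apply c_rr|].
    apply continuity_2d_pt_plus; [apply continuity_2d_pt_id1| apply continuity_2d_pt_const].
Qed.

Ltac ctac M x y H :=
  let Hr := fresh in let Hf := fresh in
  pose proof (rr_pos M x y H) as Hr; pose proof (ff_pos M x y H) as Hf;
  unfold F, Fx, Fy, Fxx, Fxy, Fyx, Fyy, fxd, fyd; unfold Rdiv;
  repeat first
    [ apply continuity_2d_pt_const
    | apply continuity_2d_pt_id1
    | apply continuity_2d_pt_id2
    | apply (c_rr M)
    | apply (c_ff M); exact H
    | apply continuity_2d_pt_plus
    | apply continuity_2d_pt_minus
    | apply continuity_2d_pt_opp
    | apply continuity_2d_pt_inv; [| apply Rgt_not_eq; nra]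
    | apply continuity_2d_pt_mult ].

Lemma cF M K x y : good M x y -> continuity_2d_pt (F M K) x y.
Proof. intros H. ctac M x y H. Qed.
Lemma cFx M K x y : good M x y -> continuity_2d_pt (Fx M K) x y.
Proof. intros H. ctac M x y H. Qed.
Lemma cFy M K x y : good M x y -> continuity_2d_pt (Fy M K) x y.
Proof. intros H. ctac M x y H. Qed.
Lemma cFxx M K x y : good M x y -> continuity_2d_pt (Fxx M K) x y.
Proof. intros H. ctac M x y H. Qed.
Lemma cFxy M K x y : good M x y -> continuity_2d_pt (Fxy M K) x y.
Proof. intros H. ctac M x y H. Qed.
Lemma cFyx M K x y : good M x y -> continuity_2d_pt (Fyx M K) x y.
Proof. intros H. ctac M x y H. Qed.
Lemma cFyy M K x y : good M x y -> continuity_2d_pt (Fyy M K) x y.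
Proof. intros H. ctac M x y H. Qed.

Lemma good_ball M z : good M (Re z) (Im z) -> exists d, 0 < d /\ forall w, Cmod (w - z) < d -> good M (Re w) (Im w).
Proof.
  intros H. destruct (Cmod_Re_Im_le (RtoC 0)) as [_ _].
  destruct (Rlt_dec 0 (Re z + M)) as [Hx|Hx].
  - exists (Re z + M). split; [lra|]. intros w Hw. right.
    destruct (Cmod_Re_Im_le (w - z)) as [H1 _]. rewrite Re_minus in H1.
    pose proof (Rle_abs (- (Re w - Re z))). rewrite Rabs_Ropp in *. lra.
  - destruct H as [H|H]; [|lra].
    exists (Rabs (Im z)). split; [apply Rabs_pos_lt; exact H|]. intros w Hw. left. intros E.
    destruct (Cmod_Re_Im_le (w - z)) as [_ H2]. rewrite Im_minus, E, Rminus_0_l, Rabs_Ropp in H2. lra.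
Qed.

Lemma cont_at_of (g : C -> R) (Phi : R -> R -> R) (z : C) (d0 : R) : 0 < d0 ->
  (forall w, Cmod (w - z) < d0 -> g w = Phi (Re w) (Im w)) ->
  continuity_2d_pt Phi (Re z) (Im z) -> cont_at g z.
Proof.
  intros Hd0 E Hc eps. destruct (Hc eps) as [d1 Hd1].
  assert (Hm : 0 < Rmin d0 d1) by (apply Rmin_pos; [lra| apply cond_pos]).
  exists (mkposreal _ Hm). intros w Hw. simpl in Hw.
  rewrite (E w) by (pose proof (Rmin_l d0 d1); lra).
  rewrite (E z) by (replace (z - z)%C with (RtoC 0) by ring; rewrite Cmod_0; lra).
  destruct (Cmod_Re_Im_le (w - z)) as [H1 H2]. rewrite Re_minus in H1. rewrite Im_minus in H2.
  apply Hd1; pose proof (Rmin_r d0 d1); lra.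
Qed.

Lemma C_eta (w : C) : w = (Re w, Im w).
Proof. destruct w; reflexivity. Qed.

Lemma harmonic_point M K z : good M (Re z) (Im z) ->
    ex_derive (fun t => uF M K (t, Im z)) (Re z) /\
    ex_derive (fun t => uF M K (Re z, t)) (Im z) /\
    ex_derive (fun t => dx (uF M K) (t, Im z)) (Re z) /\
    ex_derive (fun t => dx (uF M K) (Re z, t)) (Im z) /\
    ex_derive (fun t => dy (uF M K) (t, Im z)) (Re z) /\
    ex_derive (fun t => dy (uF M K) (Re z, t)) (Im z) /\
    cont_at (uF M K) z /\ cont_at (dx (uF M K)) z /\ cont_at (dy (uF M K)) z /\
    cont_at (dx (dx (uF M K))) z /\ cont_at (dy (dx (uF M K))) z /\
    cont_at (dx (dy (uF M K))) z /\ cont_at (dy (dy (uF M K))) z /\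
    dx (dx (uF M K)) z + dy (dy (uF M K)) z = 0.
Proof.
  intros H. set (x := Re z) in *. set (y := Im z) in *.
  destruct (good_ball M z H) as [d [Hd Hb]].
  split; [exists (Fx M K x y); apply D1; exact H|].
  split; [exists (Fy M K x y); apply D2; exact H|].
  split. { apply ex_derive_ext_loc with (fun t => Fx M K t y).
    - apply (loc_mono _ _ _ (good_loc_x M x y H)). intros t Ht. symmetry. apply dxu. exact Ht.
    - exists (Fxx M K x y). apply D3. exact H. }
  split. { apply ex_derive_ext_loc with (fun t => Fx M K x t).
    - apply (loc_mono _ _ _ (good_loc_y M x y H)). intros t Ht. symmetry. apply dxu. exact Ht.
    - exists (Fxy M K x y). apply D4. exact H. }
  split. { apply ex_derive_ext_loc with (fun t => Fy M K t y).
    - apply (loc_mono _ _ _ (good_loc_x M x y H)). intros t Ht. symmetry. apply dyu. exact Ht.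
    - exists (Fyx M K x y). apply D5. exact H. }
  split. { apply ex_derive_ext_loc with (fun t => Fy M K x t).
    - apply (loc_mono _ _ _ (good_loc_y M x y H)). intros t Ht. symmetry. apply dyu. exact Ht.
    - exists (Fyy M K x y). apply D6. exact H. }
  split. { apply (cont_at_of _ (F M K) z d Hd); [intros w _; reflexivity| apply cF; exact H]. }
  split. { apply (cont_at_of _ (Fx M K) z d Hd); [|apply cFx; exact H].
    intros w Hw. rewrite (C_eta w). apply dxu. apply Hb; exact Hw. }
  split. { apply (cont_at_of _ (Fy M K) z d Hd); [|apply cFy; exact H].
    intros w Hw. rewrite (C_eta w). apply dyu. apply Hb; exact Hw. }
  split. { apply (cont_at_of _ (Fxx M K) z d Hd); [|apply cFxx; exact H].
    intros w Hw. rewrite (C_eta w). apply dxdxu. apply Hb; exact Hw. }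
  split. { apply (cont_at_of _ (Fxy M K) z d Hd); [|apply cFxy; exact H].
    intros w Hw. rewrite (C_eta w). apply dydxu. apply Hb; exact Hw. }
  split. { apply (cont_at_of _ (Fyx M K) z d Hd); [|apply cFyx; exact H].
    intros w Hw. rewrite (C_eta w). apply dxdyu. apply Hb; exact Hw. }
  split. { apply (cont_at_of _ (Fyy M K) z d Hd); [|apply cFyy; exact H].
    intros w Hw. rewrite (C_eta w). apply dydyu. apply Hb; exact Hw. }
  rewrite (C_eta z). fold x y. rewrite dxdxu, dydyu by exact H. apply lap. exact H.
Qed.


Lemma psif_lip (a y : R) : 0 < a < 1 -> Rabs (psif a y - psif a 0) <= 1/2 * Rabs y.
Proof.
  intros Ha. apply (mvt_bound (psif a) (fun v => Im (dQ a (0, Yf a v)) * / (1 - Re (dQ a (0, Yf a v))))).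
  - intros c _. apply psif_deriv; exact Ha.
  - intros c _. apply psif_deriv_bound; exact Ha.
Qed.

Lemma exp_half_ln (t : R) : 0 < t -> exp (ln t / 2) = sqrt t.
Proof. intros H. rewrite <- Rpower_sqrt by exact H. unfold Rpower. f_equal. field. Qed.

Lemma Cexp_lam_CD (lam : R) (z : C) : CD (fun w => Cexp (RtoC lam * w)) z (RtoC lam * 1 * Cexp (RtoC lam * z))%C.
Proof.
  apply (CD_comp Cexp (fun w => RtoC lam * w)%C).
  - apply CD_scal. apply CD_id.
  - apply CD_of. apply Cexp_deriv.
Qed.

Lemma hardy (a : R) : 0 < a < 1 -> has_p_frequencies (Om a).
Proof.
  intros Ha. exists 1. split; [lra|]. intros lam Hlam. split.
  { intros z _. exists (RtoC lam * 1 * Cexp (RtoC lam * z))%C. apply CD_to. apply Cexp_lam_CD. }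
  set (M := Rabs (psif a 0) + 1).
  set (c := - lam).
  destruct (pow_small a (/ (2 * (c + 1))) ltac:(lra)) as [X0 [HX0 Hp]].
  { apply Rinv_0_lt_compat. unfold c; lra. }
  set (C0 := c * Rpower X0 a).
  set (K := 3 * exp 1 * exp C0).
  exists (uF M K).
  assert (Hxm : forall z, Om a z -> 1 - Rabs (Im z) / 2 < Re z + M).
  { intros z Hz. apply (Om_char a z Ha) in Hz.
    pose proof (psif_lip a (Im z) Ha). pose proof (Rle_abs (psif a 0)). pose proof (Rle_abs (-(psif a 0))).
    pose proof (Rle_abs (psif a (Im z) - psif a 0)). pose proof (Rle_abs (-(psif a (Im z) - psif a 0))).
    rewrite Rabs_Ropp in *. unfold M. lra. }
  split.
  - intros z Hz. apply harmonic_point.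
    destruct (Req_dec (Im z) 0) as [E|E]; [right|left; exact E].
    pose proof (Hxm z Hz). rewrite E, Rabs_R0 in H. lra.
  - intros z Hz.
    set (x := Re z) in *. set (y := Im z) in *.
    assert (Hmod : Cmod (Cexp (RtoC lam * z)) = exp (lam * x)).
    { rewrite Cmod_Cexp, Re_RtoC_mult. reflexivity. }
    unfold rpow. rewrite Hmod.
    destruct (Rle_dec (exp (lam * x)) 0) as [Hn|_]; [pose proof (exp_pos (lam * x)); lra|].
    rewrite Rpower_1 by apply exp_pos.
    pose proof (proj1 (Om_char a z Ha) Hz) as Hpsi. fold x y in Hpsi.
    pose proof (psi_upper a y Ha) as Hup.
    set (B := ln (3 + 2 * Rabs y) + 2) in *.
    assert (HB0 : 0 < B).
    { unfold B. assert (0 <= ln (3 + 2 * Rabs y)) by (rewrite <- ln_1; apply ln_le; pose proof (Rabs_pos y); lra). lra. }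
    set (P := Rpower B a) in *.
    assert (Hc : 0 <= c) by (unfold c; lra).
    assert (H1 : lam * x <= c * P) by (unfold c; nra).
    assert (H2 : c * P <= B / 2 + C0).
    { destruct (Rle_dec X0 B) as [hb|hb].
      - specialize (Hp B hb). fold P in Hp.
        assert (c * P <= c * (/ (2 * (c + 1)) * B)) by (apply Rmult_le_compat_l; lra).
        assert (c * (/ (2 * (c + 1)) * B) <= B / 2).
        { replace (c * (/ (2 * (c + 1)) * B)) with (c / (c + 1) * (B / 2)) by (field; lra).
          assert (c / (c + 1) <= 1) by (apply (Rmult_le_reg_r (c + 1)); [lra|]; field_simplify; lra).
          assert (0 <= c / (c + 1)) by (apply Rdiv_le_0_compat; lra). nra. }
        assert (0 <= C0) by (unfold C0; pose proof (Rpower_pos X0 a); nra). lra.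
      - assert (P <= Rpower X0 a) by (apply Rle_Rpower_l; lra).
        unfold C0. assert (c * P <= c * Rpower X0 a) by (apply Rmult_le_compat_l; lra). lra. }
    assert (H3 : exp (lam * x) <= exp C0 * (exp 1 * sqrt (3 + 2 * Rabs y))).
    { apply Rle_trans with (exp (B / 2 + C0)); [apply exp_le_mono; lra|].
      right. unfold B. replace ((ln (3 + 2 * Rabs y) + 2) / 2 + C0) with (C0 + (1 + ln (3 + 2 * Rabs y) / 2)) by field.
      rewrite !exp_plus. rewrite exp_half_ln by (pose proof (Rabs_pos y); lra). ring. }
    pose proof (Hxm z Hz) as Hx. fold x y in Hx.
    assert (HS : Rabs y / 2 + 1 <= rr M x y + (x + M)).
    { destruct (rr_ge M x y) as [Hr _]. lra. }
    assert (Hsq : sqrt (3 + 2 * Rabs y) <= 3 * ff M x y).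
    { unfold ff. rewrite <- (sqrt_pow2 3) at 2 by lra. rewrite <- sqrt_mult_alt by lra.
      apply sqrt_le_1_alt. replace (3 ^ 2) with 9 by ring. pose proof (Rabs_pos y). lra. }
    unfold uF, F. fold x y.
    assert (0 < exp C0) by apply exp_pos. assert (0 < exp 1) by apply exp_pos.
    unfold K.
    apply Rle_trans with (exp C0 * (exp 1 * (3 * ff M x y))); [|right; ring].
    eapply Rle_trans; [exact H3|].
    apply Rmult_le_compat_l; [lra|]. apply Rmult_le_compat_l; lra.
Qed.


Theorem proposition10p2 (a : R) (ha : 0 < a < 1) :
  let Om0 := fun z : C => exists w, Cplus_half w /\ eta a w = z in
  univalent_on Cplus_half (eta a) /\
  log_starlike_at_infinity Om0 /\
  has_p_frequencies Om0 /\
  ~ in_some_half_plane Om0.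
Proof.
  intros Om0. split; [|split; [|split]].
  - apply eta_univalent; exact ha.
  - exact (log_starlike a ha).
  - exact (hardy a ha).
  - exact (not_half_plane a ha).
Qed.
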